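(* The 756 minimal vectors of the Coxeter–Todd lattice $K_{12}$ can be partitioned into 21 subsets, each of which is the set of minimal vectors of a sublattice similar to $A_2^6$. Consequently $K_{12}$ is (up to similarity) the intersection of 21 pairwise congruent lattices in $\mathbb{R}^{12}$, each similar to $A_2^6$.
   Context: The Coxeter–Todd lattice $K_{12}$ is the 12-dimensional lattice (a 6-dimensional module over the Eisenstein integers $\mathbb{Z}[e^{2\pi i/3}]$) with 756 minimal vectors. $A_2$ is the planar hexagonal lattice and $A_2^6$ the orthogonal direct sum of six copies. Two lattices are similar if one is mapped to the other by a linear map multiplying all inner products by a common positive constant, and congruent if related by an element of $SO(12)$. *)

(* Defs.v *)
From HB Require Import structures.
From mathcomp Require Import all_boot all_order all_algebra.
From mathcomp Require Import reals.
Set Implicit Arguments. Unset Strict Implicit. Unset Printing Implicit Defensive.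
Import Order.TTheory GRing.Theory Num.Theory.
Local Open Scope ring_scope.

(* the pair (a, b) stands for a + b w *)
Definition eis := (int * int)%type.
Definition eadd (z u : eis) : eis := (z.1 + u.1, z.2 + u.2).
Definition esub (z u : eis) : eis := (z.1 - u.1, z.2 - u.2).
(* (a + b w)(c + d w) = (ac - bd) + (ad + bc - bd) w *)
Definition emul (z u : eis) : eis :=
  (z.1 * u.1 - z.2 * u.2, z.1 * u.2 + z.2 * u.1 - z.2 * u.2).
Definition edvd (d z : eis) : Prop := exists q : eis, z = emul q d.
(* theta = w - wbar = 1 + 2w = sqrt(-3) *)
Definition etheta : eis := (1, 2).
Definition ethree : eis := (3, 0).
Definition esum6 (x : 'I_6 -> eis) : eis := (\sum_(i < 6) (x i).1, \sum_(i < 6) (x i).2).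

(* complex (Eisenstein) form of K12lat (Conway-Sloane, SPLAG ch.4 sec.9):
   x in Z[w]^6 with x_i = x_j (mod theta) for all i,j and sum x_i = 0 (mod 3) *)
Definition K12_eis (x : 'I_6 -> eis) : Prop :=
  (forall i j : 'I_6, edvd etheta (esub (x i) (x j))) /\ edvd ethree (esum6 x).

Section Real.
Variable R : realType.
Definition vec := 'rV[R]_12.
Definition dot (u v : vec) : R := (u *m v^T) 0 0.

(* real embedding C^6 = R^12, coordinate i of C^6 -> coordinates 2i, 2i+1;
   a + b w |-> (a - b/2, b sqrt3/2); real inner product = Re of hermitian form *)
Definition emb (x : 'I_6 -> eis) : vec :=
  \row_(k < 12) let z := x (inord (k %/ 2)) in
     if odd k then (z.2)%:~R * (Num.sqrt 3 / 2) else (z.1)%:~R - (z.2)%:~R / 2.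

Definition K12lat : vec -> Prop := fun v => exists x, K12_eis x /\ v = emb x.
(* A2^6: orthogonal sum of six hexagonal lattices Z[w] (each the Z-span of
   (1,0) and (-1/2, sqrt3/2)), i.e. the image of all of Z[w]^6 *)
Definition A2_6 : vec -> Prop := fun v => exists x, v = emb x.

Definition is_lattice (L : vec -> Prop) : Prop :=
  exists B : 'M[R]_12, \det B != 0 /\
    forall v, L v <-> exists c : 'rV[int]_12, v = map_mx (fun n : int => n%:~R) c *m B.

Definition minvec (L : vec -> Prop) (v : vec) : Prop :=
  L v /\ v != 0 /\ forall w, L w -> w != 0 -> dot v v <= dot w w.

Definition image_by (M : 'M[R]_12) (L1 L2 : vec -> Prop) : Prop :=
  forall v, L2 v <-> exists u, L1 u /\ v = u *m M.

Definition lat_similar (L1 L2 : vec -> Prop) : Prop :=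
  exists (M : 'M[R]_12) (c : R), 0 < c /\ M *m M^T = c%:M /\ image_by M L1 L2.

Definition lat_congruent (L1 L2 : vec -> Prop) : Prop :=
  exists M : 'M[R]_12, M *m M^T = 1%:M /\ \det M = 1 /\ image_by M L1 L2.
End Real.

(* Main.v *)
Require Import Defs.
From HB Require Import structures.
From mathcomp Require Import all_boot all_order all_algebra.
From mathcomp Require Import reals.
From mathcomp Require Import ring lra zify.
Set Implicit Arguments. Unset Strict Implicit. Unset Printing Implicit Defensive.
Import Order.TTheory GRing.Theory Num.Theory.
Local Open Scope ring_scope.

(* Proof strategy: everything is reduced to integer
   coordinates in Z^12 (coefficients w.r.t. the basis of A2^6 = emb(Z[w]^6)),
   with 21 explicit frames (6 pairwise orthogonal norm-6 vectors of K12 each),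
   and certificates checked by computation (vm_compute). *)


Definition lmx := seq (seq int).
Definition lget (a : lmx) (i j : nat) : int := nth 0 (nth [::] a i) j.
Definition tomx (p q : nat) (a : lmx) : 'M[int]_(p, q) := \matrix_(i, j) lget a i j.
Definition lbuild (p q : nat) (f : nat -> nat -> int) : lmx :=
  [seq [seq f i j | j <- iota 0 q] | i <- iota 0 p].
Lemma lget_build p q f i j : (i < p)%N -> (j < q)%N -> lget (lbuild p q f) i j = f i j.
Proof.
move=> hi hj; rewrite /lget /lbuild (nth_map 0%N) ?size_iota // nth_iota //.
by rewrite (nth_map 0%N) ?size_iota // nth_iota.
Qed.
Lemma tomx_build p q f : tomx p q (lbuild p q f) = \matrix_(i, j) f i j.
Proof. by apply/matrixP => i j; rewrite !mxE lget_build. Qed.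

Definition lsum (n : nat) (f : nat -> int) : int := foldr (fun k acc => f k + acc) 0 (iota 0 n).
Lemma lsumE n f : lsum n f = \sum_(k < n) f k.
Proof.
rewrite -(big_mkord xpredT f) /index_iota subn0 /lsum.
by rewrite unlock /reducebig.
Qed.

Definition lmul (p n q : nat) (a b : lmx) : lmx :=
  lbuild p q (fun i j => lsum n (fun k => lget a i k * lget b k j)).
Lemma tomx_mul p n q a b : tomx p n a *m tomx n q b = tomx p q (lmul p n q a b).
Proof.
rewrite tomx_build; apply/matrixP => i j; rewrite !mxE lsumE.
by apply: eq_bigr => k _; rewrite !mxE.
Qed.
Definition ltr (p q : nat) (a : lmx) : lmx := lbuild q p (fun i j => lget a j i).
Lemma tomx_tr p q a : (tomx p q a)^T = tomx q p (ltr p q a).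
Proof. by rewrite tomx_build; apply/matrixP => i j; rewrite !mxE. Qed.
Definition lscale (p q : nat) (c : int) (a : lmx) : lmx := lbuild p q (fun i j => c * lget a i j).
Lemma tomx_scale p q c a : tomx p q (lscale p q c a) = c *: tomx p q a.
Proof. by rewrite tomx_build; apply/matrixP => i j; rewrite !mxE. Qed.
Definition ladd (p q : nat) (a b : lmx) : lmx := lbuild p q (fun i j => lget a i j + lget b i j).
Lemma tomx_add p q a b : tomx p q (ladd p q a b) = tomx p q a + tomx p q b.
Proof. by rewrite tomx_build; apply/matrixP => i j; rewrite !mxE. Qed.
Definition lsub (p q : nat) (a b : lmx) : lmx := lbuild p q (fun i j => lget a i j - lget b i j).
Lemma tomx_sub p q a b : tomx p q (lsub p q a b) = tomx p q a - tomx p q b.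
Proof. by rewrite tomx_build; apply/matrixP => i j; rewrite !mxE. Qed.
Definition lid (n : nat) : lmx := lbuild n n (fun i j => (i == j)%:R).
Lemma tomx_id n : tomx n n (lid n) = 1%:M.
Proof. by rewrite tomx_build; apply/matrixP => i j; rewrite !mxE. Qed.
Definition ldiv (p q : nat) (d : int) (a : lmx) : bool :=
  all (fun r => all (fun e => (d %| e)%Z) r) (lbuild p q (lget a)).
Lemma ldivP p q d a : ldiv p q d a -> forall (i : 'I_p) (j : 'I_q), (d %| tomx p q a i j)%Z.
Proof.
move=> /allP h i j; rewrite mxE.
have hi : nth [::] (lbuild p q (lget a)) i \in lbuild p q (lget a).
  by rewrite mem_nth // size_map size_iota.
move/allP: (h _ hi) => h2.
rewrite -(lget_build (lget a) (ltn_ord i) (ltn_ord j)).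
apply: h2; rewrite /lget mem_nth //.
by rewrite /lbuild (nth_map 0%N) ?size_iota // size_map size_iota.
Qed.
Lemma tomx_eq p q a b : lbuild p q (lget a) = lbuild p q (lget b) -> tomx p q a = tomx p q b.
Proof.
move=> h; apply/matrixP => i j; rewrite !mxE.
by rewrite -(lget_build (lget a) (ltn_ord i) (ltn_ord j)) h lget_build.
Qed.


Definition Vdata : seq (seq (seq (int * int))) :=
  [:: [:: [:: (Negz 1, Negz 0); (Negz 0, Negz 1); (Posz 0, Posz 0); (Posz 0, Posz 0); (Posz 0, Posz 0); (Posz 0, Posz 0)]; [:: (Negz 0, Negz 0); (Posz 0, Posz 1); (Negz 0, Negz 0); (Negz 0, Negz 0); (Negz 0, Negz 0); (Posz 1, Posz 0)]; [:: (Negz 0, Negz 0); (Posz 0, Posz 1); (Posz 0, Posz 1); (Posz 0, Posz 1); (Posz 1, Posz 0); (Posz 0, Posz 1)]; [:: (Negz 0, Negz 0); (Posz 0, Posz 1); (Posz 1, Posz 0); (Posz 1, Posz 0); (Posz 0, Posz 1); (Negz 0, Negz 0)]; [:: (Posz 0, Posz 0); (Posz 0, Posz 0); (Negz 1, Negz 0); (Posz 2, Posz 1); (Posz 0, Posz 0); (Posz 0, Posz 0)]; [:: (Posz 0, Posz 0); (Posz 0, Posz 0); (Posz 0, Posz 0); (Posz 0, Posz 0); (Negz 1, Negz 0); (Negz 0, Posz 1)]]; [:: [:: (Negz 1, Negz 0); (Negz 0, Posz 1); (Posz 0, Posz 0); (Posz 0, Posz 0); (Posz 0, Posz 0); (Posz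 0, Posz 0)]; [:: (Negz 0, Negz 0); (Posz 1, Posz 0); (Negz 0, Negz 0); (Negz 0, Negz 0); (Negz 0, Negz 0); (Posz 0, Posz 1)]; [:: (Negz 0, Negz 0); (Posz 1, Posz 0); (Posz 0, Posz 1); (Posz 1, Posz 0); (Posz 0, Posz 1); (Negz 0, Negz 0)]; [:: (Negz 0, Negz 0); (Posz 1, Posz 0); (Posz 1, Posz 0); (Posz 0, Posz 1); (Posz 1, Posz 0); (Posz 1, Posz 0)]; [:: (Posz 0, Posz 0); (Posz 0, Posz 0); (Negz 1, Negz 0); (Posz 0, Posz 0); (Posz 2, Posz 1); (Posz 0, Posz 0)]; [:: (Posz 0, Posz 0); (Posz 0, Posz 0); (Posz 0, Posz 0); (Negz 1, Negz 0); (Posz 0, Posz 0); (Negz 0, Negz 1)]]; [:: [:: (Negz 1, Negz 0); (Posz 0, Posz 0); (Negz 0, Negz 1); (Posz 0, Posz 0); (Posz 0, Posz 0); (Posz 0, Posz 0)]; [:: (Negz 0, Negz 0); (Negz 0, Negz 0); (Posz 0, Posz 1); (Negz 0, Negz 0); (Negz 0, Negz 0); (Posz 1, Posz 0)]; [:: (Negz 0, Negz 0); (Posz 0, Posz 1); (Posz 0, Posz 1); (Posz 1, Posz 0); (Posz 0, Posz 1); (Posz 0, Posz 1)]; [:: (Negz 0, Negz 0); (Posz 1, Posz 0); (Posz 0, Posz 1); (Posz 0, Posz 1); (Posz 1, Posz 0); (Negz 0, Negz 0)]; [:: (Posz 0, Posz 0); (Negz 1, Negz 0); (Posz 0, Posz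 0); (Posz 0, Posz 0); (Posz 2, Posz 1); (Posz 0, Posz 0)]; [:: (Posz 0, Posz 0); (Posz 0, Posz 0); (Posz 0, Posz 0); (Negz 1, Negz 0); (Posz 0, Posz 0); (Negz 0, Posz 1)]]; [:: [:: (Negz 1, Negz 0); (Posz 0, Posz 0); (Negz 0, Posz 1); (Posz 0, Posz 0); (Posz 0, Posz 0); (Posz 0, Posz 0)]; [:: (Negz 0, Negz 0); (Negz 0, Negz 0); (Posz 1, Posz 0); (Negz 0, Negz 0); (Negz 0, Negz 0); (Posz 0, Posz 1)]; [:: (Negz 0, Negz 0); (Posz 0, Posz 1); (Posz 1, Posz 0); (Posz 0, Posz 1); (Posz 1, Posz 0); (Negz 0, Negz 0)]; [:: (Negz 0, Negz 0); (Posz 1, Posz 0); (Posz 1, Posz 0); (Posz 1, Posz 0); (Posz 0, Posz 1); (Posz 1, Posz 0)]; [:: (Posz 0, Posz 0); (Negz 1, Negz 0); (Posz 0, Posz 0); (Posz 2, Posz 1); (Posz 0, Posz 0); (Posz 0, Posz 0)]; [:: (Posz 0, Posz 0); (Posz 0, Posz 0); (Posz 0, Posz 0); (Posz 0, Posz 0); (Negz 1, Negz 0); (Negz 0, Negz 1)]]; [:: [:: (Negz 1, Negz 0); (Posz 0, Posz 0); (Posz 0, Posz 0); (Negz 0, Negz 1); (Posz 0, Posz 0); (Posz 0, Posz 0)]; [:: (Negz 0, Negz 0); (Negz 0, Negz 0); (Negz 0, Negz 0); (Posz 0, Posz 1); (Posz 1, Posz 0); (Negz 0, Negz 0)]; [::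 (Negz 0, Negz 0); (Posz 0, Posz 1); (Posz 1, Posz 0); (Posz 0, Posz 1); (Negz 0, Negz 0); (Posz 1, Posz 0)]; [:: (Negz 0, Negz 0); (Posz 1, Posz 0); (Posz 0, Posz 1); (Posz 0, Posz 1); (Posz 0, Posz 1); (Posz 0, Posz 1)]; [:: (Posz 0, Posz 0); (Negz 1, Negz 0); (Posz 0, Posz 0); (Posz 0, Posz 0); (Negz 0, Posz 1); (Posz 0, Posz 0)]; [:: (Posz 0, Posz 0); (Posz 0, Posz 0); (Negz 1, Negz 0); (Posz 0, Posz 0); (Posz 0, Posz 0); (Posz 2, Posz 1)]]; [:: [:: (Negz 1, Negz 0); (Posz 0, Posz 0); (Posz 0, Posz 0); (Negz 0, Posz 1); (Posz 0, Posz 0); (Posz 0, Posz 0)]; [:: (Negz 0, Negz 0); (Negz 0, Negz 0); (Negz 0, Negz 0); (Posz 1, Posz 0); (Posz 0, Posz 1); (Negz 0, Negz 0)]; [:: (Negz 0, Negz 0); (Posz 0, Posz 1); (Posz 1, Posz 0); (Posz 1, Posz 0); (Negz 0, Negz 0); (Posz 0, Posz 1)]; [:: (Negz 0, Negz 0); (Posz 1, Posz 0); (Posz 0, Posz 1); (Posz 1, Posz 0); (Posz 1, Posz 0); (Posz 1, Posz 0)]; [:: (Posz 0, Posz 0); (Negz 1, Negz 0); (Posz 0, Posz 0); (Posz 0, Posz 0); (Posz 0, Posz 0); (Posz 2, Posz 1)]; [:: (Posz 0, Posz 0); (Posz 0, Posz 0); (Negz 1, Negz 0); (Posz 0, Posz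 0); (Negz 0, Negz 1); (Posz 0, Posz 0)]]; [:: [:: (Negz 1, Negz 0); (Posz 0, Posz 0); (Posz 0, Posz 0); (Posz 0, Posz 0); (Negz 0, Negz 1); (Posz 0, Posz 0)]; [:: (Negz 0, Negz 0); (Negz 0, Negz 0); (Posz 0, Posz 1); (Negz 0, Negz 0); (Posz 0, Posz 1); (Posz 0, Posz 1)]; [:: (Negz 0, Negz 0); (Posz 0, Posz 1); (Negz 0, Negz 0); (Posz 1, Posz 0); (Posz 0, Posz 1); (Posz 1, Posz 0)]; [:: (Negz 0, Negz 0); (Posz 1, Posz 0); (Posz 1, Posz 0); (Posz 0, Posz 1); (Posz 0, Posz 1); (Negz 0, Negz 0)]; [:: (Posz 0, Posz 0); (Negz 1, Negz 0); (Posz 0, Posz 0); (Posz 0, Posz 0); (Posz 0, Posz 0); (Negz 0, Negz 1)]; [:: (Posz 0, Posz 0); (Posz 0, Posz 0); (Negz 1, Negz 0); (Negz 0, Posz 1); (Posz 0, Posz 0); (Posz 0, Posz 0)]]; [:: [:: (Negz 1, Negz 0); (Posz 0, Posz 0); (Posz 0, Posz 0); (Posz 0, Posz 0); (Negz 0, Posz 1); (Posz 0, Posz 0)]; [:: (Negz 0, Negz 0); (Negz 0, Negz 0); (Posz 0, Posz 1); (Posz 0, Posz 1); (Posz 1, Posz 0); (Posz 1, Posz 0)]; [:: (Negz 0, Negz 0); (Posz 0, Posz 1); (Negz 0, Negz 0); (Posz 1, Posz 0); (Posz 1, Posz 0); (Posz 0, Posz 1)]; [:: (Negz 0, Negz 0);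 (Posz 1, Posz 0); (Posz 1, Posz 0); (Negz 0, Negz 0); (Posz 1, Posz 0); (Negz 0, Negz 0)]; [:: (Posz 0, Posz 0); (Negz 1, Negz 0); (Posz 0, Posz 0); (Negz 0, Negz 1); (Posz 0, Posz 0); (Posz 0, Posz 0)]; [:: (Posz 0, Posz 0); (Posz 0, Posz 0); (Negz 1, Negz 0); (Posz 0, Posz 0); (Posz 0, Posz 0); (Negz 0, Negz 1)]]; [:: [:: (Negz 1, Negz 0); (Posz 0, Posz 0); (Posz 0, Posz 0); (Posz 0, Posz 0); (Posz 0, Posz 0); (Negz 0, Negz 1)]; [:: (Negz 0, Negz 0); (Negz 0, Negz 0); (Negz 0, Negz 0); (Posz 0, Posz 1); (Posz 0, Posz 1); (Posz 0, Posz 1)]; [:: (Negz 0, Negz 0); (Posz 0, Posz 1); (Posz 1, Posz 0); (Negz 0, Negz 0); (Posz 1, Posz 0); (Posz 0, Posz 1)]; [:: (Negz 0, Negz 0); (Posz 1, Posz 0); (Posz 0, Posz 1); (Posz 1, Posz 0); (Negz 0, Negz 0); (Posz 0, Posz 1)]; [:: (Posz 0, Posz 0); (Negz 1, Negz 0); (Posz 0, Posz 0); (Posz 0, Posz 0); (Negz 0, Negz 1); (Posz 0, Posz 0)]; [:: (Posz 0, Posz 0); (Posz 0, Posz 0); (Negz 1, Negz 0); (Negz 0, Negz 1); (Posz 0, Posz 0); (Posz 0, Posz 0)]]; [:: [:: (Negz 1, Negz 0); (Posz 0, Posz 0); (Posz 0, Posz 0); (Posz 0, Posz 0); (Posz 0,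 Posz 0); (Negz 0, Posz 1)]; [:: (Negz 0, Negz 0); (Negz 0, Negz 0); (Negz 0, Negz 0); (Posz 1, Posz 0); (Posz 1, Posz 0); (Posz 1, Posz 0)]; [:: (Negz 0, Negz 0); (Posz 0, Posz 1); (Posz 1, Posz 0); (Negz 0, Negz 0); (Posz 0, Posz 1); (Posz 1, Posz 0)]; [:: (Negz 0, Negz 0); (Posz 1, Posz 0); (Posz 0, Posz 1); (Posz 0, Posz 1); (Negz 0, Negz 0); (Posz 1, Posz 0)]; [:: (Posz 0, Posz 0); (Negz 1, Negz 0); (Posz 0, Posz 0); (Negz 0, Posz 1); (Posz 0, Posz 0); (Posz 0, Posz 0)]; [:: (Posz 0, Posz 0); (Posz 0, Posz 0); (Negz 1, Negz 0); (Posz 0, Posz 0); (Negz 0, Posz 1); (Posz 0, Posz 0)]]; [:: [:: (Negz 1, Negz 0); (Posz 0, Posz 0); (Posz 0, Posz 0); (Posz 0, Posz 0); (Posz 0, Posz 0); (Posz 2, Posz 1)]; [:: (Negz 0, Negz 0); (Negz 0, Negz 0); (Posz 0, Posz 1); (Posz 0, Posz 1); (Posz 0, Posz 1); (Negz 0, Negz 0)]; [:: (Negz 0, Negz 0); (Posz 0, Posz 1); (Posz 1, Posz 0); (Negz 0, Negz 0); (Negz 0, Negz 0); (Negz 0, Negz 0)]; [:: (Negz 0, Negz 0); (Posz 1, Posz 0); (Negz 0, Negz 0); (Posz 1, Posz 0); (Posz 1, Posz 0); (Negz 0, Negz 0)]; [:: (Posz 0, Posz 0); (Negz 1, Negz 0);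 (Negz 0, Negz 1); (Posz 0, Posz 0); (Posz 0, Posz 0); (Posz 0, Posz 0)]; [:: (Posz 0, Posz 0); (Posz 0, Posz 0); (Posz 0, Posz 0); (Negz 1, Negz 0); (Posz 2, Posz 1); (Posz 0, Posz 0)]]; [:: [:: (Negz 1, Negz 0); (Posz 0, Posz 0); (Posz 0, Posz 0); (Posz 0, Posz 0); (Posz 2, Posz 1); (Posz 0, Posz 0)]; [:: (Negz 0, Negz 0); (Negz 0, Negz 0); (Negz 0, Negz 0); (Negz 0, Negz 0); (Negz 0, Negz 0); (Negz 0, Negz 0)]; [:: (Negz 0, Negz 0); (Posz 0, Posz 1); (Posz 0, Posz 1); (Posz 1, Posz 0); (Negz 0, Negz 0); (Posz 1, Posz 0)]; [:: (Negz 0, Negz 0); (Posz 1, Posz 0); (Posz 1, Posz 0); (Posz 0, Posz 1); (Negz 0, Negz 0); (Posz 0, Posz 1)]; [:: (Posz 0, Posz 0); (Negz 1, Negz 0); (Posz 2, Posz 1); (Posz 0, Posz 0); (Posz 0, Posz 0); (Posz 0, Posz 0)]; [:: (Posz 0, Posz 0); (Posz 0, Posz 0); (Posz 0, Posz 0); (Negz 1, Negz 0); (Posz 0, Posz 0); (Posz 2, Posz 1)]]; [:: [:: (Negz 1, Negz 0); (Posz 0, Posz 0); (Posz 0, Posz 0); (Posz 2, Posz 1); (Posz 0, Posz 0); (Posz 0, Posz 0)]; [:: (Negz 0, Negz 0); (Negz 0, Negz 0); (Posz 1, Posz 0); (Negz 0, Negz 0); (Posz 1, Posz 0); (Posz 1,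 Posz 0)]; [:: (Negz 0, Negz 0); (Posz 0, Posz 1); (Negz 0, Negz 0); (Negz 0, Negz 0); (Posz 0, Posz 1); (Posz 0, Posz 1)]; [:: (Negz 0, Negz 0); (Posz 1, Posz 0); (Posz 0, Posz 1); (Negz 0, Negz 0); (Negz 0, Negz 0); (Negz 0, Negz 0)]; [:: (Posz 0, Posz 0); (Negz 1, Negz 0); (Negz 0, Posz 1); (Posz 0, Posz 0); (Posz 0, Posz 0); (Posz 0, Posz 0)]; [:: (Posz 0, Posz 0); (Posz 0, Posz 0); (Posz 0, Posz 0); (Posz 0, Posz 0); (Negz 1, Negz 0); (Posz 2, Posz 1)]]; [:: [:: (Negz 1, Negz 0); (Posz 0, Posz 0); (Posz 2, Posz 1); (Posz 0, Posz 0); (Posz 0, Posz 0); (Posz 0, Posz 0)]; [:: (Negz 0, Negz 0); (Negz 0, Negz 0); (Negz 0, Negz 0); (Negz 0, Negz 0); (Posz 0, Posz 1); (Posz 1, Posz 0)]; [:: (Negz 0, Negz 0); (Posz 0, Posz 1); (Negz 0, Negz 0); (Posz 1, Posz 0); (Negz 0, Negz 0); (Negz 0, Negz 0)]; [:: (Negz 0, Negz 0); (Posz 1, Posz 0); (Negz 0, Negz 0); (Posz 0, Posz 1); (Posz 1, Posz 0); (Posz 0, Posz 1)]; [:: (Posz 0, Posz 0); (Negz 1, Negz 0); (Posz 0, Posz 0); (Posz 0, Posz 0); (Posz 0, Posz 0); (Negz 0, Posz 1)]; [:: (Posz 0, Posz 0); (Posz 0, Posz 0); (Posz 0, Posz 0);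 (Negz 1, Negz 0); (Negz 0, Negz 1); (Posz 0, Posz 0)]]; [:: [:: (Negz 1, Negz 0); (Posz 2, Posz 1); (Posz 0, Posz 0); (Posz 0, Posz 0); (Posz 0, Posz 0); (Posz 0, Posz 0)]; [:: (Negz 0, Negz 0); (Negz 0, Negz 0); (Negz 0, Negz 0); (Posz 0, Posz 1); (Negz 0, Negz 0); (Posz 1, Posz 0)]; [:: (Negz 0, Negz 0); (Negz 0, Negz 0); (Posz 0, Posz 1); (Negz 0, Negz 0); (Posz 1, Posz 0); (Negz 0, Negz 0)]; [:: (Negz 0, Negz 0); (Negz 0, Negz 0); (Posz 1, Posz 0); (Posz 1, Posz 0); (Posz 0, Posz 1); (Posz 0, Posz 1)]; [:: (Posz 0, Posz 0); (Posz 0, Posz 0); (Negz 1, Negz 0); (Posz 0, Posz 0); (Posz 0, Posz 0); (Negz 0, Posz 1)]; [:: (Posz 0, Posz 0); (Posz 0, Posz 0); (Posz 0, Posz 0); (Negz 1, Negz 0); (Negz 0, Posz 1); (Posz 0, Posz 0)]]; [:: [:: (Negz 0, Negz 0); (Negz 0, Negz 0); (Negz 0, Negz 0); (Negz 0, Negz 0); (Posz 1, Posz 0); (Posz 0, Posz 1)]; [:: (Negz 0, Negz 0); (Negz 0, Negz 0); (Posz 1, Posz 0); (Posz 1, Posz 0); (Negz 0, Negz 0); (Posz 1, Posz 0)]; [:: (Negz 0, Negz 0); (Posz 0, Posz 1); (Posz 0, Posz 1); (Posz 1, Posz 0); (Posz 1, Posz 0); (Negz 0, Negz 0)]; [:: (Negz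 0, Negz 0); (Posz 0, Posz 1); (Posz 1, Posz 0); (Posz 0, Posz 1); (Posz 0, Posz 1); (Posz 0, Posz 1)]; [:: (Negz 0, Negz 0); (Posz 1, Posz 0); (Negz 0, Negz 0); (Posz 0, Posz 1); (Negz 0, Negz 0); (Negz 0, Negz 0)]; [:: (Negz 0, Negz 0); (Posz 1, Posz 0); (Posz 0, Posz 1); (Negz 0, Negz 0); (Posz 0, Posz 1); (Posz 1, Posz 0)]]; [:: [:: (Negz 0, Negz 0); (Negz 0, Negz 0); (Negz 0, Negz 0); (Posz 1, Posz 0); (Negz 0, Negz 0); (Posz 0, Posz 1)]; [:: (Negz 0, Negz 0); (Negz 0, Negz 0); (Posz 1, Posz 0); (Negz 0, Negz 0); (Posz 0, Posz 1); (Negz 0, Negz 0)]; [:: (Negz 0, Negz 0); (Posz 0, Posz 1); (Posz 0, Posz 1); (Posz 0, Posz 1); (Negz 0, Negz 0); (Negz 0, Negz 0)]; [:: (Negz 0, Negz 0); (Posz 0, Posz 1); (Posz 1, Posz 0); (Posz 1, Posz 0); (Posz 1, Posz 0); (Posz 1, Posz 0)]; [:: (Negz 0, Negz 0); (Posz 1, Posz 0); (Negz 0, Negz 0); (Posz 0, Posz 1); (Posz 0, Posz 1); (Posz 1, Posz 0)]; [:: (Negz 0, Negz 0); (Posz 1, Posz 0); (Posz 0, Posz 1); (Negz 0, Negz 0); (Posz 1, Posz 0); (Posz 0, Posz 1)]]; [:: [:: (Negz 0, Negz 0); (Negz 0, Negz 0); (Posz 0, Posz 1); (Posz 0, Posz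 1); (Negz 0, Negz 0); (Posz 0, Posz 1)]; [:: (Negz 0, Negz 0); (Negz 0, Negz 0); (Posz 1, Posz 0); (Posz 1, Posz 0); (Posz 1, Posz 0); (Negz 0, Negz 0)]; [:: (Negz 0, Negz 0); (Posz 0, Posz 1); (Negz 0, Negz 0); (Posz 0, Posz 1); (Posz 0, Posz 1); (Negz 0, Negz 0)]; [:: (Negz 0, Negz 0); (Posz 0, Posz 1); (Posz 0, Posz 1); (Negz 0, Negz 0); (Posz 1, Posz 0); (Posz 1, Posz 0)]; [:: (Negz 0, Negz 0); (Posz 1, Posz 0); (Negz 0, Negz 0); (Posz 1, Posz 0); (Negz 0, Negz 0); (Posz 1, Posz 0)]; [:: (Negz 0, Negz 0); (Posz 1, Posz 0); (Posz 1, Posz 0); (Negz 0, Negz 0); (Posz 0, Posz 1); (Posz 0, Posz 1)]]; [:: [:: (Negz 0, Negz 0); (Negz 0, Negz 0); (Posz 0, Posz 1); (Posz 1, Posz 0); (Negz 0, Negz 0); (Negz 0, Negz 0)]; [:: (Negz 0, Negz 0); (Negz 0, Negz 0); (Posz 1, Posz 0); (Posz 0, Posz 1); (Posz 1, Posz 0); (Posz 0, Posz 1)]; [:: (Negz 0, Negz 0); (Posz 0, Posz 1); (Negz 0, Negz 0); (Negz 0, Negz 0); (Posz 1, Posz 0); (Negz 0, Negz 0)]; [:: (Negz 0, Negz 0); (Posz 0, Posz 1); (Posz 0, Posz 1); (Posz 0, Posz 1); (Posz 0, Posz 1); (Posz 1, Posz 0)]; [:: (Negz 0, Negz 0); (Posz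 1, Posz 0); (Negz 0, Negz 0); (Posz 1, Posz 0); (Posz 0, Posz 1); (Posz 0, Posz 1)]; [:: (Negz 0, Negz 0); (Posz 1, Posz 0); (Posz 1, Posz 0); (Negz 0, Negz 0); (Negz 0, Negz 0); (Posz 1, Posz 0)]]; [:: [:: (Negz 0, Negz 0); (Negz 0, Negz 0); (Posz 0, Posz 1); (Posz 1, Posz 0); (Posz 0, Posz 1); (Posz 1, Posz 0)]; [:: (Negz 0, Negz 0); (Negz 0, Negz 0); (Posz 1, Posz 0); (Posz 0, Posz 1); (Negz 0, Negz 0); (Negz 0, Negz 0)]; [:: (Negz 0, Negz 0); (Posz 0, Posz 1); (Negz 0, Negz 0); (Posz 0, Posz 1); (Posz 1, Posz 0); (Posz 1, Posz 0)]; [:: (Negz 0, Negz 0); (Posz 0, Posz 1); (Posz 0, Posz 1); (Negz 0, Negz 0); (Negz 0, Negz 0); (Posz 0, Posz 1)]; [:: (Negz 0, Negz 0); (Posz 1, Posz 0); (Negz 0, Negz 0); (Negz 0, Negz 0); (Posz 0, Posz 1); (Negz 0, Negz 0)]; [:: (Negz 0, Negz 0); (Posz 1, Posz 0); (Posz 1, Posz 0); (Posz 1, Posz 0); (Posz 1, Posz 0); (Posz 0, Posz 1)]]; [:: [:: (Negz 0, Negz 0); (Negz 0, Negz 0); (Posz 0, Posz 1); (Posz 1, Posz 0); (Posz 1, Posz 0); (Posz 0, Posz 1)]; [:: (Negz 0, Negz 0); (Negz 0, Negz 0); (Posz 1, Posz 0); (Posz 0, Posz 1); (Posz 0, Posz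 1); (Posz 1, Posz 0)]; [:: (Negz 0, Negz 0); (Posz 0, Posz 1); (Negz 0, Negz 0); (Posz 0, Posz 1); (Negz 0, Negz 0); (Posz 0, Posz 1)]; [:: (Negz 0, Negz 0); (Posz 0, Posz 1); (Posz 0, Posz 1); (Negz 0, Negz 0); (Posz 0, Posz 1); (Negz 0, Negz 0)]; [:: (Negz 0, Negz 0); (Posz 1, Posz 0); (Negz 0, Negz 0); (Negz 0, Negz 0); (Posz 1, Posz 0); (Posz 1, Posz 0)]; [:: (Negz 0, Negz 0); (Posz 1, Posz 0); (Posz 1, Posz 0); (Posz 1, Posz 0); (Negz 0, Negz 0); (Negz 0, Negz 0)]]].

Definition G0l : lmx := [:: [:: Negz 2; Negz 0; Negz 0; Posz 0; Posz 0; Posz 0; Posz 2; Posz 0; Posz 0; Posz 0; Posz 0; Posz 0]; [:: Posz 37; Posz 12; Posz 12; Posz 1; Posz 4; Posz 4; Negz 25; Negz 3; Negz 3; Negz 3; Posz 4; Posz 8]; [:: Negz 12; Negz 3; Negz 3; Negz 0; Negz 1; Negz 1; Posz 10; Posz 2; Posz 2; Posz 2; Negz 1; Negz 3]; [:: Posz 16; Posz 5; Posz 5; Posz 1; Posz 2; Posz 2; Negz 11; Negz 1; Negz 1; Negz 1; Posz 2; Posz 4]; [:: Posz 6; Posz 2; Posz 2; Posz 0; Posz 1; Posz 1; Negz 3; Negz 0; Negz 0; Negz 0; Posz 1; Posz 2]; [:: Posz 0; Posz 0; Posz 0; Posz 0; Negz 0; Posz 0; Posz 1; Posz 1; Posz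 1; Posz 0; Posz 0; Negz 0]; [:: Posz 6; Posz 2; Posz 2; Posz 0; Posz 1; Posz 1; Negz 3; Negz 0; Negz 0; Negz 0; Posz 1; Posz 2]; [:: Posz 0; Posz 0; Posz 0; Posz 0; Negz 0; Posz 0; Posz 1; Posz 1; Posz 1; Posz 0; Posz 0; Negz 0]; [:: Posz 6; Posz 2; Posz 2; Posz 0; Posz 0; Posz 1; Negz 3; Negz 0; Posz 0; Negz 0; Posz 1; Posz 2]; [:: Posz 0; Posz 0; Posz 0; Posz 0; Negz 0; Negz 0; Posz 1; Posz 1; Posz 1; Posz 1; Posz 0; Negz 0]; [:: Negz 11; Negz 3; Negz 3; Posz 0; Negz 0; Negz 1; Posz 9; Posz 2; Posz 1; Posz 2; Negz 0; Negz 2]; [:: Posz 6; Posz 2; Posz 2; Posz 0; Posz 0; Posz 1; Negz 3; Negz 0; Posz 0; Negz 0; Posz 1; Posz 2]].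

Definition Gp0l : lmx := [:: [:: Negz 0; Negz 1; Posz 0; Posz 0; Negz 1; Posz 0; Negz 0]; [:: Posz 4; Posz 7; Negz 0; Posz 1; Posz 3; Posz 3; Posz 5]; [:: Posz 2; Posz 3; Posz 1; Posz 1; Posz 1; Posz 1; Posz 1]; [:: Posz 1; Posz 3; Negz 2; Negz 0; Posz 3; Posz 1; Posz 4]; [:: Posz 0; Posz 0; Posz 1; Posz 0; Negz 0; Posz 1; Negz 0]; [:: Posz 2; Posz 3; Posz 0; Posz 1; Posz 1; Posz 1; Posz 2]; [:: Posz 0; Posz 0; Posz 1; Posz 0; Negz 0; Posz 1; Negz 0]; [:: Posz 2; Posz 3; Posz 0; Posz 1; Posz 1; Posz 1; Posz 2]; [:: Posz 0; Negz 0; Posz 1; Posz 1; Negz 0; Posz 1; Negz 0]; [:: Posz 2; Posz 2; Posz 0; Posz 2; Posz 1; Posz 1; Posz 2]; [:: Posz 2; Posz 3; Negz 0; Posz 1; Posz 4; Posz 2; Posz 3]; [:: Negz 1; Negz 2; Posz 1; Negz 0; Negz 2; Negz 0; Negz 2]].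

Definition Xdata : seq lmx := [:: [:: [:: Posz 1; Posz 2; Posz 1; Posz 0; Posz 1; Posz 0; Posz 1; Posz 0; Posz 0; Posz 0; Posz 0; Posz 0]; [:: Posz 0; Posz 0; Posz 2; Posz 2; Posz 1; Posz 0; Posz 0; Posz 1; Posz 2; Posz 1; Posz 0; Posz 0]; [:: Posz 0; Posz 0; Posz 2; Posz 2; Posz 1; Posz 0; Posz 0; Posz 1; Posz 1; Posz 2; Posz 0; Posz 0]; [:: Posz 0; Posz 0; Posz 2; Posz 2; Posz 0; Posz 1; Posz 1; Posz 0; Posz 0; Posz 0; Posz 2; Posz 1]; [:: Posz 0; Posz 0; Posz 0; Posz 1; Posz 1; Posz 0; Posz 2; Posz 2; Posz 0; Posz 0; Posz 1; Posz 2]; [:: Posz 0; Posz 0; Posz 1; Posz 2; Posz 1; Posz 2; Posz 1; Posz 2; Posz 0; Posz 0; Posz 0; Posz 0]; [:: Posz 0; Posz 0; Posz 0; Posz 0; Posz 0; Posz 0; Posz 0; Posz 0; Posz 0; Posz 0; Posz 0; Posz 0]]; [:: [:: Posz 1; Posz 2; Posz 0; Posz 1; Posz 0; Posz 1; Posz 0; Posz 1; Posz 0; Posz 0; Posz 0; Posz 0]; [:: Posz 0; Posz 0; Posz 2; Posz 2; Posz 1; Posz 0; Posz 0; Posz 1; Posz 2; Posz 1; Posz 0; Posz 0]; [:: Posz 0; Posz 0; Posz 2; Posz 2; Posz 0; Posz 1; Posz 1; Posz 0; Posz 0; Posz 0; Posz 2; Posz 1]; [:: Posz 0; Posz 0;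 Posz 2; Posz 2; Posz 1; Posz 0; Posz 0; Posz 1; Posz 1; Posz 2; Posz 0; Posz 0]; [:: Posz 0; Posz 0; Posz 1; Posz 0; Posz 2; Posz 2; Posz 0; Posz 1; Posz 0; Posz 0; Posz 1; Posz 2]; [:: Posz 0; Posz 0; Posz 1; Posz 2; Posz 1; Posz 2; Posz 1; Posz 2; Posz 0; Posz 0; Posz 0; Posz 0]; [:: Posz 0; Posz 0; Posz 0; Posz 0; Posz 0; Posz 0; Posz 0; Posz 0; Posz 0; Posz 0; Posz 0; Posz 0]]; [:: [:: Posz 0; Posz 0; Posz 2; Posz 2; Posz 1; Posz 0; Posz 0; Posz 1; Posz 2; Posz 1; Posz 0; Posz 0]; [:: Posz 1; Posz 2; Posz 1; Posz 0; Posz 1; Posz 0; Posz 1; Posz 0; Posz 0; Posz 0; Posz 0; Posz 0]; [:: Posz 0; Posz 0; Posz 2; Posz 2; Posz 0; Posz 1; Posz 1; Posz 0; Posz 0; Posz 0; Posz 2; Posz 1]; [:: Posz 0; Posz 0; Posz 2; Posz 2; Posz 1; Posz 0; Posz 0; Posz 1; Posz 1; Posz 2; Posz 0; Posz 0]; [:: Posz 0; Posz 0; Posz 0; Posz 1; Posz 1; Posz 0; Posz 2; Posz 2; Posz 0; Posz 0; Posz 1; Posz 2]; [:: Posz 0; Posz 0; Posz 1; Posz 2; Posz 1; Posz 2; Posz 1; Posz 2; Posz 0; Posz 0; Posz 0; Posz 0]; [:: Posz 0; Posz 0; Posz 0; Posz 0; Posz 0; Posz 0; Posz 0; Posz 0;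 Posz 0; Posz 0; Posz 0; Posz 0]]; [:: [:: Posz 0; Posz 0; Posz 2; Posz 2; Posz 1; Posz 0; Posz 0; Posz 1; Posz 2; Posz 1; Posz 0; Posz 0]; [:: Posz 1; Posz 2; Posz 0; Posz 1; Posz 0; Posz 1; Posz 0; Posz 1; Posz 0; Posz 0; Posz 0; Posz 0]; [:: Posz 0; Posz 0; Posz 2; Posz 2; Posz 1; Posz 0; Posz 0; Posz 1; Posz 1; Posz 2; Posz 0; Posz 0]; [:: Posz 0; Posz 0; Posz 2; Posz 2; Posz 0; Posz 1; Posz 1; Posz 0; Posz 0; Posz 0; Posz 2; Posz 1]; [:: Posz 0; Posz 0; Posz 1; Posz 0; Posz 2; Posz 2; Posz 0; Posz 1; Posz 0; Posz 0; Posz 1; Posz 2]; [:: Posz 0; Posz 0; Posz 1; Posz 2; Posz 1; Posz 2; Posz 1; Posz 2; Posz 0; Posz 0; Posz 0; Posz 0]; [:: Posz 0; Posz 0; Posz 0; Posz 0; Posz 0; Posz 0; Posz 0; Posz 0; Posz 0; Posz 0; Posz 0; Posz 0]]; [:: [:: Posz 0; Posz 0; Posz 2; Posz 2; Posz 1; Posz 0; Posz 0; Posz 1; Posz 2; Posz 1; Posz 0; Posz 0]; [:: Posz 0; Posz 0; Posz 2; Posz 2; Posz 0; Posz 1; Posz 1; Posz 0; Posz 0; Posz 0; Posz 2; Posz 1]; [:: Posz 1; Posz 2; Posz 1; Posz 0; Posz 1; Posz 0; Posz 1; Posz 0; Posz 0; Posz 0; Posz 0; Posz 0]; [:: Posz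 0; Posz 0; Posz 0; Posz 1; Posz 2; Posz 2; Posz 1; Posz 0; Posz 1; Posz 2; Posz 0; Posz 0]; [:: Posz 0; Posz 0; Posz 2; Posz 2; Posz 0; Posz 1; Posz 1; Posz 0; Posz 0; Posz 0; Posz 1; Posz 2]; [:: Posz 0; Posz 0; Posz 1; Posz 2; Posz 1; Posz 2; Posz 1; Posz 2; Posz 0; Posz 0; Posz 0; Posz 0]; [:: Posz 0; Posz 0; Posz 0; Posz 0; Posz 0; Posz 0; Posz 0; Posz 0; Posz 0; Posz 0; Posz 0; Posz 0]]; [:: [:: Posz 0; Posz 0; Posz 2; Posz 2; Posz 1; Posz 0; Posz 0; Posz 1; Posz 2; Posz 1; Posz 0; Posz 0]; [:: Posz 0; Posz 0; Posz 2; Posz 2; Posz 0; Posz 1; Posz 1; Posz 0; Posz 0; Posz 0; Posz 2; Posz 1]; [:: Posz 1; Posz 2; Posz 0; Posz 1; Posz 0; Posz 1; Posz 0; Posz 1; Posz 0; Posz 0; Posz 0; Posz 0]; [:: Posz 0; Posz 0; Posz 1; Posz 0; Posz 2; Posz 2; Posz 0; Posz 1; Posz 0; Posz 0; Posz 1; Posz 2]; [:: Posz 0; Posz 0; Posz 2; Posz 2; Posz 1; Posz 0; Posz 0; Posz 1; Posz 1; Posz 2; Posz 0; Posz 0]; [:: Posz 0; Posz 0; Posz 1; Posz 2; Posz 1; Posz 2; Posz 1; Posz 2; Posz 0; Posz 0; Posz 0; Posz 0]; [:: Posz 0; Posz 0; Posz 0; Posz 0; Posz 0; Posz 0; Posz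 0; Posz 0; Posz 0; Posz 0; Posz 0; Posz 0]]; [:: [:: Posz 0; Posz 0; Posz 2; Posz 2; Posz 1; Posz 0; Posz 0; Posz 1; Posz 2; Posz 1; Posz 0; Posz 0]; [:: Posz 0; Posz 0; Posz 1; Posz 0; Posz 2; Posz 2; Posz 0; Posz 1; Posz 0; Posz 0; Posz 2; Posz 1]; [:: Posz 0; Posz 0; Posz 2; Posz 2; Posz 0; Posz 1; Posz 1; Posz 0; Posz 0; Posz 0; Posz 1; Posz 2]; [:: Posz 1; Posz 2; Posz 1; Posz 0; Posz 1; Posz 0; Posz 1; Posz 0; Posz 0; Posz 0; Posz 0; Posz 0]; [:: Posz 0; Posz 0; Posz 1; Posz 0; Posz 0; Posz 1; Posz 2; Posz 2; Posz 1; Posz 2; Posz 0; Posz 0]; [:: Posz 0; Posz 0; Posz 1; Posz 2; Posz 1; Posz 2; Posz 1; Posz 2; Posz 0; Posz 0; Posz 0; Posz 0]; [:: Posz 0; Posz 0; Posz 0; Posz 0; Posz 0; Posz 0; Posz 0; Posz 0; Posz 0; Posz 0; Posz 0; Posz 0]]; [:: [:: Posz 0; Posz 0; Posz 2; Posz 2; Posz 1; Posz 0; Posz 0; Posz 1; Posz 2; Posz 1; Posz 0; Posz 0]; [:: Posz 0; Posz 0; Posz 1; Posz 0; Posz 2; Posz 2; Posz 0; Posz 1; Posz 0; Posz 0; Posz 2; Posz 1]; [:: Posz 0; Posz 0; Posz 1; Posz 0; Posz 0; Posz 1; Posz 2; Posz 2; Posz 1; Posz 2; Posz 0; Posz 0];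 [:: Posz 1; Posz 2; Posz 0; Posz 1; Posz 0; Posz 1; Posz 0; Posz 1; Posz 0; Posz 0; Posz 0; Posz 0]; [:: Posz 0; Posz 0; Posz 0; Posz 1; Posz 1; Posz 0; Posz 2; Posz 2; Posz 0; Posz 0; Posz 1; Posz 2]; [:: Posz 0; Posz 0; Posz 1; Posz 2; Posz 1; Posz 2; Posz 1; Posz 2; Posz 0; Posz 0; Posz 0; Posz 0]; [:: Posz 0; Posz 0; Posz 0; Posz 0; Posz 0; Posz 0; Posz 0; Posz 0; Posz 0; Posz 0; Posz 0; Posz 0]]; [:: [:: Posz 0; Posz 0; Posz 2; Posz 2; Posz 1; Posz 0; Posz 0; Posz 1; Posz 2; Posz 1; Posz 0; Posz 0]; [:: Posz 0; Posz 0; Posz 2; Posz 2; Posz 0; Posz 1; Posz 1; Posz 0; Posz 0; Posz 0; Posz 2; Posz 1]; [:: Posz 0; Posz 0; Posz 1; Posz 0; Posz 2; Posz 2; Posz 0; Posz 1; Posz 0; Posz 0; Posz 1; Posz 2]; [:: Posz 0; Posz 0; Posz 1; Posz 0; Posz 0; Posz 1; Posz 2; Posz 2; Posz 1; Posz 2; Posz 0; Posz 0]; [:: Posz 1; Posz 2; Posz 1; Posz 0; Posz 1; Posz 0; Posz 1; Posz 0; Posz 0; Posz 0; Posz 0; Posz 0]; [:: Posz 0; Posz 0; Posz 1; Posz 2; Posz 1; Posz 2; Posz 1; Posz 2; Posz 0; Posz 0; Posz 0; Posz 0]; [:: Posz 0; Posz 0; Posz 0; Posz 0; Posz 0; Posz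 0; Posz 0; Posz 0; Posz 0; Posz 0; Posz 0; Posz 0]]; [:: [:: Posz 0; Posz 0; Posz 2; Posz 2; Posz 1; Posz 0; Posz 0; Posz 1; Posz 2; Posz 1; Posz 0; Posz 0]; [:: Posz 0; Posz 0; Posz 2; Posz 2; Posz 0; Posz 1; Posz 1; Posz 0; Posz 0; Posz 0; Posz 2; Posz 1]; [:: Posz 0; Posz 0; Posz 0; Posz 1; Posz 2; Posz 2; Posz 1; Posz 0; Posz 1; Posz 2; Posz 0; Posz 0]; [:: Posz 0; Posz 0; Posz 0; Posz 1; Posz 1; Posz 0; Posz 2; Posz 2; Posz 0; Posz 0; Posz 1; Posz 2]; [:: Posz 1; Posz 2; Posz 0; Posz 1; Posz 0; Posz 1; Posz 0; Posz 1; Posz 0; Posz 0; Posz 0; Posz 0]; [:: Posz 0; Posz 0; Posz 1; Posz 2; Posz 1; Posz 2; Posz 1; Posz 2; Posz 0; Posz 0; Posz 0; Posz 0]; [:: Posz 0; Posz 0; Posz 0; Posz 0; Posz 0; Posz 0; Posz 0; Posz 0; Posz 0; Posz 0; Posz 0; Posz 0]]; [:: [:: Posz 0; Posz 0; Posz 2; Posz 2; Posz 1; Posz 0; Posz 0; Posz 1; Posz 2; Posz 1; Posz 0; Posz 0]; [:: Posz 0; Posz 0; Posz 1; Posz 0; Posz 0; Posz 1; Posz 2; Posz 2; Posz 1; Posz 2; Posz 0; Posz 0]; [:: Posz 0; Posz 0; Posz 1; Posz 0; Posz 2; Posz 2; Posz 0; Posz 1; Posz 0; Posz 0; Posz 2;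 Posz 1]; [:: Posz 0; Posz 0; Posz 1; Posz 0; Posz 2; Posz 2; Posz 0; Posz 1; Posz 0; Posz 0; Posz 1; Posz 2]; [:: Posz 1; Posz 2; Posz 2; Posz 2; Posz 2; Posz 2; Posz 2; Posz 2; Posz 0; Posz 0; Posz 0; Posz 0]; [:: Posz 0; Posz 0; Posz 1; Posz 2; Posz 1; Posz 2; Posz 1; Posz 2; Posz 0; Posz 0; Posz 0; Posz 0]; [:: Posz 0; Posz 0; Posz 0; Posz 0; Posz 0; Posz 0; Posz 0; Posz 0; Posz 0; Posz 0; Posz 0; Posz 0]]; [:: [:: Posz 0; Posz 0; Posz 2; Posz 2; Posz 1; Posz 0; Posz 0; Posz 1; Posz 2; Posz 1; Posz 0; Posz 0]; [:: Posz 0; Posz 0; Posz 2; Posz 2; Posz 1; Posz 0; Posz 0; Posz 1; Posz 1; Posz 2; Posz 0; Posz 0]; [:: Posz 0; Posz 0; Posz 2; Posz 2; Posz 0; Posz 1; Posz 1; Posz 0; Posz 0; Posz 0; Posz 2; Posz 1]; [:: Posz 1; Posz 2; Posz 2; Posz 2; Posz 2; Posz 2; Posz 2; Posz 2; Posz 0; Posz 0; Posz 0; Posz 0]; [:: Posz 0; Posz 0; Posz 2; Posz 2; Posz 0; Posz 1; Posz 1; Posz 0; Posz 0; Posz 0; Posz 1; Posz 2]; [:: Posz 0; Posz 0; Posz 1; Posz 2; Posz 1; Posz 2; Posz 1; Posz 2; Posz 0; Posz 0; Posz 0; Posz 0]; [:: Posz 0; Posz 0; Posz 0; Posz 0; Posz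 0; Posz 0; Posz 0; Posz 0; Posz 0; Posz 0; Posz 0; Posz 0]]; [:: [:: Posz 0; Posz 0; Posz 2; Posz 2; Posz 1; Posz 0; Posz 0; Posz 1; Posz 2; Posz 1; Posz 0; Posz 0]; [:: Posz 0; Posz 0; Posz 0; Posz 1; Posz 2; Posz 2; Posz 1; Posz 0; Posz 1; Posz 2; Posz 0; Posz 0]; [:: Posz 1; Posz 2; Posz 2; Posz 2; Posz 2; Posz 2; Posz 2; Posz 2; Posz 0; Posz 0; Posz 0; Posz 0]; [:: Posz 0; Posz 0; Posz 0; Posz 1; Posz 1; Posz 0; Posz 2; Posz 2; Posz 0; Posz 0; Posz 2; Posz 1]; [:: Posz 0; Posz 0; Posz 0; Posz 1; Posz 1; Posz 0; Posz 2; Posz 2; Posz 0; Posz 0; Posz 1; Posz 2]; [:: Posz 0; Posz 0; Posz 1; Posz 2; Posz 1; Posz 2; Posz 1; Posz 2; Posz 0; Posz 0; Posz 0; Posz 0]; [:: Posz 0; Posz 0; Posz 0; Posz 0; Posz 0; Posz 0; Posz 0; Posz 0; Posz 0; Posz 0; Posz 0; Posz 0]]; [:: [:: Posz 0; Posz 0; Posz 2; Posz 2; Posz 1; Posz 0; Posz 0; Posz 1; Posz 2; Posz 1; Posz 0; Posz 0]; [:: Posz 1; Posz 2; Posz 2; Posz 2; Posz 2; Posz 2; Posz 2; Posz 2; Posz 0; Posz 0; Posz 0; Posz 0]; [:: Posz 0; Posz 0; Posz 2; Posz 2; Posz 0; Posz 1; Posz 1; Posz 0; Posz 0; Posz 0;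 Posz 2; Posz 1]; [:: Posz 0; Posz 0; Posz 1; Posz 0; Posz 2; Posz 2; Posz 0; Posz 1; Posz 0; Posz 0; Posz 1; Posz 2]; [:: Posz 0; Posz 0; Posz 0; Posz 1; Posz 2; Posz 2; Posz 1; Posz 0; Posz 1; Posz 2; Posz 0; Posz 0]; [:: Posz 0; Posz 0; Posz 1; Posz 2; Posz 1; Posz 2; Posz 1; Posz 2; Posz 0; Posz 0; Posz 0; Posz 0]; [:: Posz 0; Posz 0; Posz 0; Posz 0; Posz 0; Posz 0; Posz 0; Posz 0; Posz 0; Posz 0; Posz 0; Posz 0]]; [:: [:: Posz 1; Posz 2; Posz 2; Posz 2; Posz 2; Posz 2; Posz 2; Posz 2; Posz 0; Posz 0; Posz 0; Posz 0]; [:: Posz 0; Posz 0; Posz 2; Posz 2; Posz 1; Posz 0; Posz 0; Posz 1; Posz 2; Posz 1; Posz 0; Posz 0]; [:: Posz 0; Posz 0; Posz 1; Posz 0; Posz 2; Posz 2; Posz 0; Posz 1; Posz 0; Posz 0; Posz 2; Posz 1]; [:: Posz 0; Posz 0; Posz 2; Posz 2; Posz 0; Posz 1; Posz 1; Posz 0; Posz 0; Posz 0; Posz 1; Posz 2]; [:: Posz 0; Posz 0; Posz 0; Posz 1; Posz 2; Posz 2; Posz 1; Posz 0; Posz 1; Posz 2; Posz 0; Posz 0]; [:: Posz 0; Posz 0; Posz 1; Posz 2; Posz 1; Posz 2; Posz 1; Posz 2; Posz 0; Posz 0; Posz 0; Posz 0]; [:: Posz 0; Posz 0; Posz 0; Posz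 0; Posz 0; Posz 0; Posz 0; Posz 0; Posz 0; Posz 0; Posz 0; Posz 0]]; [:: [:: Posz 2; Posz 2; Posz 2; Posz 2; Posz 1; Posz 0; Posz 1; Posz 0; Posz 0; Posz 1; Posz 0; Posz 1]; [:: Posz 2; Posz 2; Posz 0; Posz 1; Posz 1; Posz 0; Posz 0; Posz 1; Posz 2; Posz 2; Posz 1; Posz 0]; [:: Posz 2; Posz 2; Posz 0; Posz 1; Posz 0; Posz 1; Posz 1; Posz 0; Posz 1; Posz 0; Posz 2; Posz 2]; [:: Posz 0; Posz 1; Posz 2; Posz 2; Posz 0; Posz 1; Posz 1; Posz 0; Posz 2; Posz 2; Posz 1; Posz 0]; [:: Posz 1; Posz 0; Posz 0; Posz 1; Posz 2; Posz 2; Posz 1; Posz 0; Posz 2; Posz 2; Posz 0; Posz 1]; [:: Posz 1; Posz 2; Posz 1; Posz 2; Posz 1; Posz 2; Posz 1; Posz 2; Posz 1; Posz 2; Posz 1; Posz 2]; [:: Posz 0; Posz 0; Posz 0; Posz 0; Posz 0; Posz 0; Posz 0; Posz 0; Posz 0; Posz 0; Posz 0; Posz 0]]; [:: [:: Posz 2; Posz 2; Posz 2; Posz 2; Posz 1; Posz 0; Posz 1; Posz 0; Posz 0; Posz 1; Posz 0; Posz 1]; [:: Posz 2; Posz 2; Posz 0; Posz 1; Posz 1; Posz 0; Posz 0; Posz 1; Posz 2; Posz 2; Posz 1; Posz 0]; [:: Posz 0; Posz 1; Posz 2; Posz 2; Posz 1; Posz 0; Posz 0; Posz 1; Posz 1;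 Posz 0; Posz 2; Posz 2]; [:: Posz 2; Posz 2; Posz 1; Posz 0; Posz 2; Posz 2; Posz 0; Posz 1; Posz 1; Posz 0; Posz 0; Posz 1]; [:: Posz 1; Posz 0; Posz 2; Posz 2; Posz 2; Posz 2; Posz 0; Posz 1; Posz 0; Posz 1; Posz 1; Posz 0]; [:: Posz 1; Posz 2; Posz 1; Posz 2; Posz 1; Posz 2; Posz 1; Posz 2; Posz 1; Posz 2; Posz 1; Posz 2]; [:: Posz 0; Posz 0; Posz 0; Posz 0; Posz 0; Posz 0; Posz 0; Posz 0; Posz 0; Posz 0; Posz 0; Posz 0]]; [:: [:: Posz 2; Posz 2; Posz 2; Posz 2; Posz 1; Posz 0; Posz 1; Posz 0; Posz 0; Posz 1; Posz 0; Posz 1]; [:: Posz 1; Posz 0; Posz 0; Posz 1; Posz 2; Posz 2; Posz 1; Posz 0; Posz 2; Posz 2; Posz 0; Posz 1]; [:: Posz 1; Posz 0; Posz 0; Posz 1; Posz 1; Posz 0; Posz 2; Posz 2; Posz 0; Posz 1; Posz 2; Posz 2]; [:: Posz 2; Posz 2; Posz 0; Posz 1; Posz 1; Posz 0; Posz 0; Posz 1; Posz 2; Posz 2; Posz 1; Posz 0]; [:: Posz 1; Posz 0; Posz 2; Posz 2; Posz 2; Posz 2; Posz 0; Posz 1; Posz 0; Posz 1; Posz 1; Posz 0]; [:: Posz 1; Posz 2; Posz 1; Posz 2; Posz 1; Posz 2; Posz 1; Posz 2; Posz 1; Posz 2; Posz 1; Posz 2]; [:: Posz 0; Posz 0; Posz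 0; Posz 0; Posz 0; Posz 0; Posz 0; Posz 0; Posz 0; Posz 0; Posz 0; Posz 0]]; [:: [:: Posz 2; Posz 2; Posz 2; Posz 2; Posz 1; Posz 0; Posz 1; Posz 0; Posz 0; Posz 1; Posz 0; Posz 1]; [:: Posz 1; Posz 0; Posz 0; Posz 1; Posz 2; Posz 2; Posz 1; Posz 0; Posz 2; Posz 2; Posz 0; Posz 1]; [:: Posz 0; Posz 1; Posz 1; Posz 0; Posz 2; Posz 2; Posz 1; Posz 0; Posz 0; Posz 1; Posz 2; Posz 2]; [:: Posz 2; Posz 2; Posz 0; Posz 1; Posz 0; Posz 1; Posz 1; Posz 0; Posz 1; Posz 0; Posz 2; Posz 2]; [:: Posz 2; Posz 2; Posz 1; Posz 0; Posz 2; Posz 2; Posz 0; Posz 1; Posz 1; Posz 0; Posz 0; Posz 1]; [:: Posz 1; Posz 2; Posz 1; Posz 2; Posz 1; Posz 2; Posz 1; Posz 2; Posz 1; Posz 2; Posz 1; Posz 2]; [:: Posz 0; Posz 0; Posz 0; Posz 0; Posz 0; Posz 0; Posz 0; Posz 0; Posz 0; Posz 0; Posz 0; Posz 0]]; [:: [:: Posz 2; Posz 2; Posz 2; Posz 2; Posz 1; Posz 0; Posz 1; Posz 0; Posz 0; Posz 1; Posz 0; Posz 1]; [:: Posz 1; Posz 0; Posz 0; Posz 1; Posz 2; Posz 2; Posz 1; Posz 0; Posz 2; Posz 2; Posz 0; Posz 1]; [:: Posz 0; Posz 1; Posz 1; Posz 0; Posz 1; Posz 0; Posz 2; Posz 2;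 Posz 2; Posz 2; Posz 0; Posz 1]; [:: Posz 1; Posz 0; Posz 2; Posz 2; Posz 0; Posz 1; Posz 2; Posz 2; Posz 1; Posz 0; Posz 0; Posz 1]; [:: Posz 0; Posz 1; Posz 2; Posz 2; Posz 0; Posz 1; Posz 1; Posz 0; Posz 2; Posz 2; Posz 1; Posz 0]; [:: Posz 1; Posz 2; Posz 1; Posz 2; Posz 1; Posz 2; Posz 1; Posz 2; Posz 1; Posz 2; Posz 1; Posz 2]; [:: Posz 0; Posz 0; Posz 0; Posz 0; Posz 0; Posz 0; Posz 0; Posz 0; Posz 0; Posz 0; Posz 0; Posz 0]]; [:: [:: Posz 2; Posz 2; Posz 2; Posz 2; Posz 1; Posz 0; Posz 1; Posz 0; Posz 0; Posz 1; Posz 0; Posz 1]; [:: Posz 1; Posz 0; Posz 0; Posz 1; Posz 2; Posz 2; Posz 1; Posz 0; Posz 2; Posz 2; Posz 0; Posz 1]; [:: Posz 0; Posz 1; Posz 1; Posz 0; Posz 1; Posz 0; Posz 2; Posz 2; Posz 2; Posz 2; Posz 0; Posz 1]; [:: Posz 0; Posz 1; Posz 1; Posz 0; Posz 2; Posz 2; Posz 1; Posz 0; Posz 0; Posz 1; Posz 2; Posz 2]; [:: Posz 1; Posz 0; Posz 0; Posz 1; Posz 1; Posz 0; Posz 2; Posz 2; Posz 0; Posz 1; Posz 2; Posz 2]; [:: Posz 1; Posz 2; Posz 1; Posz 2; Posz 1; Posz 2; Posz 1; Posz 2; Posz 1; Posz 2; Posz 1; Posz 2]; [:: Posz 0; Posz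 0; Posz 0; Posz 0; Posz 0; Posz 0; Posz 0; Posz 0; Posz 0; Posz 0; Posz 0; Posz 0]]].

Definition G2l : lmx := lbuild 12 12 (fun i j => if (i %/ 2 == j %/ 2)%N then (if i == j then 2 else -1) else 0).
Definition Wml : lmx := lbuild 12 7 (fun i c =>
  if (c < 5)%N then ((i %/ 2 == c.+1)%N%:R - (i %/ 2 == 0)%N%:R)
  else if c == 5%N then (~~ odd i)%:R else (odd i)%:R).
Definition PmatL (V : seq (seq (int * int))) : lmx := lbuild 12 12 (fun p q =>
  let v := nth (0,0) (nth [::] V (p %/ 2)) (q %/ 2) in
  if odd p then (if odd q then v.1 - v.2 else - v.2) else (if odd q then v.2 else v.1)).
Definition conjE (z : int * int) : int * int := (z.1 - z.2, - z.2).
Definition VstarL (V : seq (seq (int * int))) : seq (seq (int * int)) :=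
  [seq [seq conjE (nth (0,0) (nth [::] V j) k) | j <- iota 0 6] | k <- iota 0 6].
Definition Pl (i : nat) : lmx := PmatL (nth [::] Vdata i).
Definition Ypl (i : nat) : lmx := PmatL (VstarL (nth [::] Vdata i)).
Definition Xl (i : nat) : lmx := nth [::] Xdata i.
Definition Pcl : lmx := lbuild 12 12 (fun i j => if i == 1%N then (if (j <= 1)%N then -1 else 0) else (i == j)%:R).

Definition chk_c1 : bool := all (fun i =>
  lmul 12 12 12 (lmul 12 12 12 (Pl i) G2l) (ltr 12 12 (Pl i)) == lscale 12 12 6 G2l) (iota 0 21).
Lemma chk_c1_ok : chk_c1. Proof. vm_compute. reflexivity. Qed.
Definition chk_c2 : bool := all (fun i => ldiv 12 7 3 (lmul 12 12 7 (Pl i) Wml)) (iota 0 21).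
Lemma chk_c2_ok : chk_c2. Proof. vm_compute. reflexivity. Qed.
Definition chk_c3 : bool := all (fun i =>
  (lmul 12 12 12 (Ypl i) (Pl i) == lscale 12 12 6 (lid 12)) &&
  ldiv 12 12 3 (lsub 12 12 (Ypl i) (lmul 12 7 12 Wml (Xl i)))) (iota 0 21).
Lemma chk_c3_ok : chk_c3. Proof. vm_compute. reflexivity. Qed.
Definition chk_c4 : bool :=
  [&& ldiv 12 12 2 (lmul 12 12 12 (Pl 0) G0l),
      ldiv 12 12 2 (lmul 12 12 12 (Pl 1) (lsub 12 12 (lid 12) G0l)),
      ldiv 12 7 6 (lmul 12 12 7 (Pl 0) Gp0l) &
      ldiv 12 7 6 (lmul 12 12 7 (Pl 1) (lsub 12 7 Wml Gp0l))].
Lemma chk_c4_ok : chk_c4. Proof. vm_compute. reflexivity. Qed.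
Lemma chk_pc : lmul 12 12 12 (lmul 12 12 12 Pcl G2l) (ltr 12 12 Pcl) == lscale 12 12 1 G2l.
Proof. vm_compute. reflexivity. Qed.


Definition Nz (z : int * int) : int := z.1 * z.1 - z.1 * z.2 + z.2 * z.2.
Fixpoint normL (l : seq int) : int :=
  if l is a :: t then (if t is b :: t' then Nz (a, b) + normL t' else 0) else 0.
Definition box : seq (int * int) :=
  [seq (a, b) | a <- [:: Negz 1; Negz 0; Posz 0; Posz 1; Posz 2], b <- [:: Negz 1; Negz 0; Posz 0; Posz 1; Posz 2]].
Fixpoint allgen (P : seq int -> bool) (n : nat) (b : int) (pre : seq int) : bool :=
  if n is n'.+1 then
    all (fun z => if Nz z <= b then allgen P n' (b - Nz z) (pre ++ [:: z.1; z.2]) else true) box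
  else P pre.

Lemma Nz_ge0 z : 0 <= Nz z.
Proof. case: z => a b; rewrite /Nz /=; have := sqr_ge0 (2*b - a); rewrite expr2 => h1; nia. Qed.

Lemma normL_ge0 l : 0 <= normL l.
Proof.
elim: l {-2}l (leqnn (size l)) => [|x l IH] [|a [|b t]] //= hs.
by apply: addr_ge0; [exact: Nz_ge0 | apply: IH; rewrite /= in hs; apply: ltnW].
Qed.

Lemma int_small (a : int) : -2 <= a <= 2 -> a \in [:: Negz 1; Negz 0; Posz 0; Posz 1; Posz 2].
Proof.
move=> /andP [h1 h2].
have : (a = -2 \/ a = -1 \/ a = 0 \/ a = 1 \/ a = 2) by lia.
by case=> [->|[->|[->|[->|->]]]].
Qed.

Lemma box_mem a b : Nz (a, b) <= 6 -> (a, b) \in box.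
Proof.
rewrite /Nz /= => h.
have := sqr_ge0 (2*b - a); rewrite expr2 => h1.
have := sqr_ge0 (2*a - b); rewrite expr2 => h2.
have ha2 : a * a <= 8 by nia.
have hb2 : b * b <= 8 by nia.
have ha : -2 <= a <= 2 by apply/andP; split; nia.
have hb : -2 <= b <= 2 by apply/andP; split; nia.
apply/allpairsP; exists (a, b) => /=; split => //; exact: int_small.
Qed.

Lemma allgenP P n : forall b pre l, b <= 6 -> allgen P n b pre ->
  size l = (2 * n)%N -> normL l <= b -> P (pre ++ l).
Proof.
elim: n => [|n IH] b pre l hb6.
  by move=> /= hP; case: l => // _ _; rewrite cats0.
move=> hall.
case: l => [|a [|b' t]] //=; first by move=> h; exfalso; lia.
move=> hs.
have hs' : size t = (2 * n)%N by lia.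
move=> hn.
have hN : Nz (a, b') <= b by have := normL_ge0 t; lra.
have hbox : (a, b') \in box by apply: box_mem; lra.
have := allP hall _ hbox; rewrite hN => hg.
have := IH _ _ t _ hg hs'; rewrite -catA /=; apply.
  by have := Nz_ge0 (a, b'); lra.
by lra.
Qed.

Definition Kl (l : seq int) : bool := ldiv 1 7 3 (lmul 1 12 7 [:: l] Wml).
Definition zero12 : seq int := nseq 12 0.
Definition units6 : seq (int * int) :=
  [:: (Posz 1, Posz 0); (Posz 0, Posz 1); (Negz 0, Negz 0); (Negz 0, Posz 0); (Posz 0, Negz 0); (Posz 1, Posz 1)].
Definition Ulist : seq (seq int) :=
  [seq [seq (if m == (2 * k)%N then u.1 else if m == (2 * k).+1 then u.2 else 0) | m <- iota 0 12]
  | k <- iota 0 6, u <- units6].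
Definition vecmat (a : seq int) (P : lmx) : seq int := nth [::] (lmul 1 12 12 [:: a] P) 0.
Definition Slist : seq (seq int) := [seq vecmat a (Pl i) | i <- iota 0 21, a <- Ulist].
Definition Stag : seq (nat * seq int) := [seq (i, vecmat a (Pl i)) | i <- iota 0 21, a <- Ulist].
Definition chkK (S : seq (seq int)) (l : seq int) : bool :=
  if Kl l then (if l == zero12 then true else (if normL l == 6 then l \in S else false)) else true.
Lemma chkK_ok : let S := Slist in allgen (chkK S) 6 6 [::].
Proof. vm_compute. reflexivity. Qed.
Lemma chkU_ok : allgen (fun l => if l == zero12 then true else l \in Ulist) 6 1 [::].
Proof. vm_compute. reflexivity. Qed.
Lemma chkD_ok : let S := Stag in all (fun p => all (fun q => if p.2 == q.2 then p.1 == q.1 else true) S) S.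
Proof. vm_compute. reflexivity. Qed.


Section Real.
Variable R : realType.
Notation intmx := (map_mx (fun n : int => (n%:~R : R))).
Definition s3 : R := Num.sqrt 3.
Lemma s3s3 : s3 * s3 = 3.
Proof. by rewrite -expr2 sqr_sqrtr // ler0n. Qed.
Definition aF (i j : nat) : R := if (i %/ 2 == j %/ 2)%N then
  (if odd i then (if odd j then s3 / 2 else - (1/2)) else (if odd j then 0 else 1)) else 0.
Definition bF (i j : nat) : R := if (i %/ 2 == j %/ 2)%N then
  (if odd i then (if odd j then 2 * s3 / 3 else s3 / 3) else (if odd j then 0 else 1)) else 0.
Definition gF (i j : nat) : R := if (i %/ 2 == j %/ 2)%N then (if i == j then 1 else - (1/2)) else 0.
Definition Am : 'M[R]_12 := \matrix_(i, j) aF i j.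
Definition Ainv : 'M[R]_12 := \matrix_(i, j) bF i j.

Lemma mulmx_fun (F G : nat -> nat -> R) (i j : 'I_12) :
  ((\matrix_(a, b) F a b : 'M[R]_12) *m (\matrix_(a, b) G a b : 'M[R]_12)) i j = \sum_(k < 12) F i k * G k j.
Proof. by rewrite !mxE; apply: eq_bigr => k _; rewrite !mxE. Qed.

Lemma ord12 (P : 'I_12 -> Prop) : P (@Ordinal 12 0 isT) -> P (@Ordinal 12 1 isT) -> P (@Ordinal 12 2 isT) -> P (@Ordinal 12 3 isT) -> P (@Ordinal 12 4 isT) -> P (@Ordinal 12 5 isT) -> P (@Ordinal 12 6 isT) -> P (@Ordinal 12 7 isT) -> P (@Ordinal 12 8 isT) -> P (@Ordinal 12 9 isT) -> P (@Ordinal 12 10 isT) -> P (@Ordinal 12 11 isT) -> forall i, P i.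
Proof.
move=> H0 H1 H2 H3 H4 H5 H6 H7 H8 H9 H10 H11 [n hn].
destruct n as [|n]; first by have -> : Ordinal hn = @Ordinal 12 0 isT by apply: val_inj.
destruct n as [|n]; first by have -> : Ordinal hn = @Ordinal 12 1 isT by apply: val_inj.
destruct n as [|n]; first by have -> : Ordinal hn = @Ordinal 12 2 isT by apply: val_inj.
destruct n as [|n]; first by have -> : Ordinal hn = @Ordinal 12 3 isT by apply: val_inj.
destruct n as [|n]; first by have -> : Ordinal hn = @Ordinal 12 4 isT by apply: val_inj.
destruct n as [|n]; first by have -> : Ordinal hn = @Ordinal 12 5 isT by apply: val_inj.
destruct n as [|n]; first by have -> : Ordinal hn = @Ordinal 12 6 isT by apply: val_inj.
destruct n as [|n]; first by have -> : Ordinal hn = @Ordinal 12 7 isT by apply: val_inj.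
destruct n as [|n]; first by have -> : Ordinal hn = @Ordinal 12 8 isT by apply: val_inj.
destruct n as [|n]; first by have -> : Ordinal hn = @Ordinal 12 9 isT by apply: val_inj.
destruct n as [|n]; first by have -> : Ordinal hn = @Ordinal 12 10 isT by apply: val_inj.
destruct n as [|n]; first by have -> : Ordinal hn = @Ordinal 12 11 isT by apply: val_inj.
by exfalso; move: (hn); rewrite !ltnS ltn0.
Qed.

Ltac case12 i := move: i; apply: ord12.

Lemma A_Ainv : Am *m Ainv = 1%:M.
Proof.
have h3 := s3s3.
apply/matrixP => i j; rewrite mulmx_fun !big_ord_recr big_ord0 /= mxE.
case12 i; case12 j; rewrite /aF /bF /=; lra.
Qed.

Lemma Ainv_A : Ainv *m Am = 1%:M.
Proof.
have h3 := s3s3.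
apply/matrixP => i j; rewrite /Ainv /Am mulmx_fun !big_ord_recr big_ord0 /= mxE.
case12 i; case12 j; rewrite /aF /bF /=; lra.
Qed.

Lemma AmT : Am^T = \matrix_(i, j) aF j i.
Proof. by apply/matrixP => i j; rewrite !mxE. Qed.

Lemma AAt : Am *m Am^T = \matrix_(i, j) gF i j.
Proof.
have h3 := s3s3.
apply/matrixP => i j; rewrite !mxE (eq_bigr (fun k : 'I_12 => aF i k * aF j k)); last by move=> k _; rewrite !mxE.
rewrite !big_ord_recr big_ord0 /=.
case12 i; case12 j; rewrite /aF /gF /=; lra.
Qed.

Lemma d2_0 : (0 %/ 2 = 0)%N. Proof. by []. Qed.
Lemma d2_1 : (1 %/ 2 = 0)%N. Proof. by []. Qed.
Lemma d2_2 : (2 %/ 2 = 1)%N. Proof. by []. Qed.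
Lemma d2_3 : (3 %/ 2 = 1)%N. Proof. by []. Qed.
Lemma d2_4 : (4 %/ 2 = 2)%N. Proof. by []. Qed.
Lemma d2_5 : (5 %/ 2 = 2)%N. Proof. by []. Qed.
Lemma d2_6 : (6 %/ 2 = 3)%N. Proof. by []. Qed.
Lemma d2_7 : (7 %/ 2 = 3)%N. Proof. by []. Qed.
Lemma d2_8 : (8 %/ 2 = 4)%N. Proof. by []. Qed.
Lemma d2_9 : (9 %/ 2 = 4)%N. Proof. by []. Qed.
Lemma d2_10 : (10 %/ 2 = 5)%N. Proof. by []. Qed.
Lemma d2_11 : (11 %/ 2 = 5)%N. Proof. by []. Qed.
Definition div2E := (d2_0, d2_1, d2_2, d2_3, d2_4, d2_5, d2_6, d2_7, d2_8, d2_9, d2_10, d2_11).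

Definition cF (x : 'I_6 -> eis) (k : nat) : int :=
  let z := x (inord (k %/ 2)) in if odd k then z.2 else z.1.
Definition coords (x : 'I_6 -> eis) : 'rV[int]_12 := \row_(k < 12) cF x k.

Lemma emb_coords (x : 'I_6 -> eis) : emb R x = intmx (coords x) *m Am.
Proof.
apply/matrixP => i k; rewrite (ord1 i) !mxE.
rewrite (eq_bigr (fun j : 'I_12 => (cF x j)%:~R * aF j k)); last by move=> j _; rewrite !mxE.
rewrite !big_ord_recr big_ord0 /=.
case12 k; rewrite /aF /cF /= ?div2E -/s3; lra.
Qed.

Definition dR : 'rV[R]_12 := \row_(j < 12) (if (j == 1 :> nat) then -1 else 1).
Definition Rm : 'M[R]_12 := diag_mx dR.
Definition pcF (i j : nat) : int := if i == 1%N then (if (j <= 1)%N then -1 else 0) else (i == j)%:R.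

Lemma intmx_build p q (f : nat -> nat -> int) :
  intmx (tomx p q (lbuild p q f)) = \matrix_(i, j) (f i j)%:~R.
Proof. by rewrite tomx_build; apply/matrixP => i j; rewrite !mxE. Qed.

Lemma A_Rm : Am *m Rm = intmx (tomx 12 12 Pcl) *m Am.
Proof.
rewrite /Rm mul_mx_diag intmx_build.
apply/matrixP => i j; rewrite !mxE (eq_bigr (fun k : 'I_12 => (pcF i k)%:~R * aF k j)); last by move=> k _; rewrite !mxE.
rewrite !big_ord_recr big_ord0 /=.
case12 i; case12 j; rewrite /aF /pcF /=; lra.
Qed.

Lemma Rm_Rm : Rm *m Rm^T = 1%:M.
Proof.
rewrite /Rm tr_diag_mx mul_mx_diag; apply/matrixP => i j; rewrite !mxE.
case: (eqVneq i j) => [->|hij]; last by rewrite !mulr0n mul0r.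
by rewrite !mulr1n; case: ifP => _; rewrite ?mulrNN mulr1.
Qed.

Lemma det_Rm : \det Rm = -1.
Proof. rewrite det_diag !big_ord_recr big_ord0 /= !mxE /=. lra. Qed.
End Real.


Lemma ord7 (P : 'I_7 -> Prop) : P (@Ordinal 7 0 isT) -> P (@Ordinal 7 1 isT) -> P (@Ordinal 7 2 isT) -> P (@Ordinal 7 3 isT) -> P (@Ordinal 7 4 isT) -> P (@Ordinal 7 5 isT) -> P (@Ordinal 7 6 isT) -> forall i, P i.
Proof.
move=> H0 H1 H2 H3 H4 H5 H6 [n hn].
destruct n as [|n]; first by have -> : Ordinal hn = @Ordinal 7 0 isT by apply: val_inj.
destruct n as [|n]; first by have -> : Ordinal hn = @Ordinal 7 1 isT by apply: val_inj.
destruct n as [|n]; first by have -> : Ordinal hn = @Ordinal 7 2 isT by apply: val_inj.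
destruct n as [|n]; first by have -> : Ordinal hn = @Ordinal 7 3 isT by apply: val_inj.
destruct n as [|n]; first by have -> : Ordinal hn = @Ordinal 7 4 isT by apply: val_inj.
destruct n as [|n]; first by have -> : Ordinal hn = @Ordinal 7 5 isT by apply: val_inj.
destruct n as [|n]; first by have -> : Ordinal hn = @Ordinal 7 6 isT by apply: val_inj.
by exfalso; move: (hn); rewrite !ltnS ltn0.
Qed.
Ltac case7 i := move: i; apply: ord7.

Lemma dvd_eq (E1 E2 : int) : E1 = E2 -> (3 %| E2)%Z -> (3 %| E1)%Z.
Proof. by move=> ->. Qed.

Lemma edvd_th z : edvd etheta z <-> (3 %| z.1 + z.2)%Z.
Proof.
split.
  case=> q ->; rewrite /emul /etheta /=.
  apply: (@dvd_eq _ (3 * (q.1 - q.2))); first by ring.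
  by apply: dvdz_mulr; rewrite dvdzz.
move=> h.
have h1 : (3 %| 2 * z.2 - z.1)%Z.
  by apply: (@dvd_eq _ (2 * (z.1 + z.2) - 3 * z.1)); [ring | apply: rpredB; [exact: dvdz_mull | apply: dvdz_mulr; exact: dvdzz]].
have h2 : (3 %| z.2 - 2 * z.1)%Z.
  by apply: (@dvd_eq _ ((z.1 + z.2) - 3 * z.1)); [ring | apply: rpredB; [exact: h | apply: dvdz_mulr; exact: dvdzz]].
exists (((2 * z.2 - z.1) %/ 3)%Z, ((z.2 - 2 * z.1) %/ 3)%Z).
case: z h h1 h2 => a b /= h h1 h2.
rewrite /emul /etheta /=.
have e1 := divzK h1; have e2 := divzK h2.
congr (_, _); lia.
Qed.

Lemma edvd_3 z : edvd ethree z <-> (3 %| z.1)%Z /\ (3 %| z.2)%Z.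
Proof.
split.
  case=> q ->; rewrite /emul /ethree /=; split.
    by apply: (@dvd_eq _ (q.1 * 3)); [ring | apply: dvdz_mull; exact: dvdzz].
  by apply: (@dvd_eq _ (q.2 * 3)); [ring | apply: dvdz_mull; exact: dvdzz].
case=> h1 h2; exists ((z.1 %/ 3)%Z, (z.2 %/ 3)%Z).
case: z h1 h2 => a b /= h1 h2; rewrite /emul /ethree /=.
have e1 := divzK h1; have e2 := divzK h2.
congr (_, _); lia.
Qed.

Definition Wmx : 'M[int]_(12, 7) := tomx 12 7 Wml.
Definition Kc (c : 'rV[int]_12) : Prop := forall j : 'I_7, (3 %| (c *m Wmx) ord0 j)%Z.

Lemma Wmx_entry (c : 'rV[int]_12) (j : 'I_7) :
  (c *m Wmx) ord0 j = \sum_(k < 12) c ord0 k * (if (j < 5)%N then ((k %/ 2 == j.+1)%N%:R - (k %/ 2 == 0)%N%:R)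
  else if j == 5%N :> nat then (~~ odd k)%:R else (odd k)%:R).
Proof. rewrite /Wmx /Wml tomx_build mxE; apply: eq_bigr => k _; by rewrite mxE. Qed.

Lemma K12_coords (x : 'I_6 -> eis) : K12_eis x <-> Kc (coords x).
Proof.
have hs1 : (esum6 x).1 = \sum_(i < 6) (x (inord i)).1.
  by rewrite /esum6 /=; apply: eq_bigr => i _; rewrite inord_val.
have hs2 : (esum6 x).2 = \sum_(i < 6) (x (inord i)).2.
  by rewrite /esum6 /=; apply: eq_bigr => i _; rewrite inord_val.
rewrite /K12_eis edvd_3 hs1 hs2 !big_ord_recr !big_ord0 /=.
split.
  case=> H1 [H2 H3] j; rewrite Wmx_entry !big_ord_recr !big_ord0 /= !mxE /cF /= ?div2E.
  case7 j => /=.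
  - have := H1 (inord 1) (inord 0); rewrite edvd_th /esub /= => h.
    by apply: (dvd_eq _ h); ring.
  - have := H1 (inord 2) (inord 0); rewrite edvd_th /esub /= => h.
    by apply: (dvd_eq _ h); ring.
  - have := H1 (inord 3) (inord 0); rewrite edvd_th /esub /= => h.
    by apply: (dvd_eq _ h); ring.
  - have := H1 (inord 4) (inord 0); rewrite edvd_th /esub /= => h.
    by apply: (dvd_eq _ h); ring.
  - have := H1 (inord 5) (inord 0); rewrite edvd_th /esub /= => h.
    by apply: (dvd_eq _ h); ring.
  - by apply: (dvd_eq _ H2); ring.
  - by apply: (dvd_eq _ H3); ring.
move=> H.
have He : forall j : 'I_7, (3 %| \sum_(k < 12) (coords x) ord0 k * (if (j < 5)%N then ((k %/ 2 == j.+1)%N%:R - (k %/ 2 == 0)%N%:R)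
  else if j == 5%N :> nat then (~~ odd k)%:R else (odd k)%:R))%Z.
  by move=> j; rewrite -Wmx_entry; apply: H.
pose f (m : nat) : int := (x (inord m)).1 + (x (inord m)).2.
have hA : forall m : 'I_6, (3 %| f m - f 0%N)%Z.
  case=> m hm.
  destruct m as [|[|[|[|[|[|m]]]]]].
  all: rewrite /f /=.
  - by rewrite subrr dvdz0.
  - by have := He (@Ordinal 7 0 isT); rewrite !big_ord_recr !big_ord0 /= !mxE /cF /= ?div2E => h; apply: (dvd_eq _ h); ring.
  - by have := He (@Ordinal 7 1 isT); rewrite !big_ord_recr !big_ord0 /= !mxE /cF /= ?div2E => h; apply: (dvd_eq _ h); ring.
  - by have := He (@Ordinal 7 2 isT); rewrite !big_ord_recr !big_ord0 /= !mxE /cF /= ?div2E => h; apply: (dvd_eq _ h); ring.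
  - by have := He (@Ordinal 7 3 isT); rewrite !big_ord_recr !big_ord0 /= !mxE /cF /= ?div2E => h; apply: (dvd_eq _ h); ring.
  - by have := He (@Ordinal 7 4 isT); rewrite !big_ord_recr !big_ord0 /= !mxE /cF /= ?div2E => h; apply: (dvd_eq _ h); ring.
  - by exfalso; move: (hm); rewrite !ltnS ltn0.
split.
  move=> i j; rewrite edvd_th /esub /=.
  have := rpredB (hA i) (hA j); rewrite /f !inord_val => h.
  by apply: (dvd_eq _ h); ring.
split.
  by have := He (@Ordinal 7 5 isT); rewrite !big_ord_recr !big_ord0 /= !mxE /cF /= ?div2E => h; apply: (dvd_eq _ h); ring.
by have := He (@Ordinal 7 6 isT); rewrite !big_ord_recr !big_ord0 /= !mxE /cF /= ?div2E => h; apply: (dvd_eq _ h); ring.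
Qed.


Ltac case12 i := move: i; apply: ord12.

Section Real2.
Variable R : realType.
Notation intmx := (map_mx (fun n : int => (n%:~R : R))).
Notation Am := (Am R).
Notation Ainv := (Ainv R).

Definition uncoords (c : 'rV[int]_12) : 'I_6 -> eis :=
  fun i => (c ord0 (inord (2 * i)), c ord0 (inord (2 * i).+1)).

Lemma coords_uncoords c : coords (uncoords c) = c.
Proof.
apply/matrixP => i k; rewrite (ord1 i) !mxE /cF /uncoords.
case12 k; rewrite /= ?div2E; congr (c ord0 _); apply: val_inj; rewrite /= !inordK //.
Qed.

Lemma A2_6_iff (u : vec R) : A2_6 u <-> exists c : 'rV[int]_12, u = intmx c *m Am.
Proof.
split; first by case=> x ->; exists (coords x); rewrite emb_coords.
by case=> c ->; exists (uncoords c); rewrite emb_coords coords_uncoords.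
Qed.

Lemma K12_iff (v : vec R) : K12lat v <-> exists c, v = intmx c *m Am /\ Kc c.
Proof.
split.
  by case=> x [hx ->]; exists (coords x); rewrite emb_coords; split => //; apply/K12_coords.
case=> c [-> hc]; exists (uncoords c); rewrite emb_coords coords_uncoords; split => //.
by apply/K12_coords; rewrite coords_uncoords.
Qed.

Lemma detA : \det Am != 0.
Proof.
apply/eqP => h; have := congr1 determinant (A_Ainv R).
by rewrite det_mulmx h mul0r det1 => /esym/eqP; rewrite oner_eq0.
Qed.

Lemma intmx_inj m n (c c' : 'M[int]_(m, n)) : intmx c = intmx c' -> c = c'.
Proof.
move=> h; apply/matrixP => i j; have := congr1 (fun M : 'M[R]_(m, n) => M i j) h; rewrite /= !mxE.
exact: intr_inj.
Qed.

Lemma intmxA_inj (c c' : 'rV[int]_12) : intmx c *m Am = intmx c' *m Am -> c = c'.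
Proof.
move=> h; apply: intmx_inj; have := congr1 (mulmx^~ Ainv) h.
by rewrite -!mulmxA (A_Ainv R) !mulmx1.
Qed.

Lemma G2_AAt : intmx (tomx 12 12 G2l) = 2 *: (Am *m Am^T).
Proof.
rewrite AAt /G2l intmx_build; apply/matrixP => i j; rewrite !mxE /gF.
case: ifP => _; last by rewrite mulr0.
case: ifP => _; lra.
Qed.

Definition normQ (c : 'rV[int]_12) : int := (c *m tomx 12 12 G2l *m c^T) ord0 ord0.

Lemma dot_norm (c : 'rV[int]_12) : dot (intmx c *m Am) (intmx c *m Am) = (normQ c)%:~R / 2.
Proof.
rewrite /dot trmx_mul mulmxA -[intmx c *m Am *m Am^T]mulmxA.
have -> : Am *m Am^T = 2^-1 *: intmx (tomx 12 12 G2l).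
  by rewrite G2_AAt scalerA mulVf ?scale1r // pnatr_eq0.
rewrite -scalemxAr -scalemxAl map_trmx -!map_mxM mxE /normQ mxE.
by rewrite mulrC.
Qed.

Definition Nmat (P : 'M[int]_12) : 'M[R]_12 := Ainv *m intmx P *m Am.

Lemma Nmat_mul (c : 'rV[int]_12) P : intmx c *m Am *m Nmat P = intmx (c *m P) *m Am.
Proof. by rewrite /Nmat !mulmxA -[intmx c *m Am *m Ainv]mulmxA (A_Ainv R) mulmx1 map_mxM. Qed.

Lemma AAt_half : Am *m Am^T = 2^-1 *: intmx (tomx 12 12 G2l).
Proof. by rewrite G2_AAt scalerA mulVf ?scale1r // pnatr_eq0. Qed.

Lemma sim_gen (P : 'M[int]_12) (k : int) :
  P *m tomx 12 12 G2l *m P^T = k *: tomx 12 12 G2l -> Nmat P *m (Nmat P)^T = (k%:~R)%:M.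
Proof.
move=> hP.
have e1 : Nmat P *m (Nmat P)^T = Ainv *m (intmx P *m (Am *m Am^T) *m (intmx P)^T) *m Ainv^T.
  by rewrite /Nmat !trmx_mul !mulmxA.
have e2 : intmx P *m (Am *m Am^T) *m (intmx P)^T = k%:~R *: (Am *m Am^T).
  rewrite AAt_half -scalemxAr -scalemxAl map_trmx -!map_mxM hP.
  have -> : intmx (k *: tomx 12 12 G2l) = k%:~R *: intmx (tomx 12 12 G2l).
    by apply/matrixP => i j; rewrite !mxE intrM.
  by rewrite !scalerA mulrC.
rewrite e1 e2 -scalemxAr -scalemxAl mulmxA (Ainv_A R) mul1mx -trmx_mul (Ainv_A R) trmx1.
by rewrite scalemx1.
Qed.

Lemma normQ_mul (c : 'rV[int]_12) (P : 'M[int]_12) (k : int) :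
  P *m tomx 12 12 G2l *m P^T = k *: tomx 12 12 G2l -> normQ (c *m P) = k * normQ c.
Proof.
move=> hP; rewrite /normQ.
have -> : c *m P *m tomx 12 12 G2l *m (c *m P)^T = c *m (P *m tomx 12 12 G2l *m P^T) *m c^T.
  by rewrite trmx_mul !mulmxA.
by rewrite hP -scalemxAr -scalemxAl mxE.
Qed.

Definition img (N : 'M[R]_12) : vec R -> Prop := fun v => exists u, A2_6 u /\ v = u *m N.

Lemma img_iff N v : img N v <-> exists c : 'rV[int]_12, v = intmx c *m (Am *m N).
Proof.
split.
  by case=> u [/A2_6_iff [c ->] ->]; exists c; rewrite mulmxA.
by case=> c ->; exists (intmx c *m Am); split; [apply/A2_6_iff; exists c | rewrite mulmxA].
Qed.

Lemma det_ne0 (N : 'M[R]_12) c : c != 0 -> N *m N^T = c%:M -> \det N != 0.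
Proof.
move=> hc hN; apply/eqP => h; have := congr1 determinant hN.
rewrite det_mulmx det_tr h mul0r det_scalar => /esym/eqP.
by rewrite expf_eq0 (negPf hc) andbF.
Qed.

Lemma img_lattice N c : c != 0 -> N *m N^T = c%:M -> is_lattice (img N).
Proof.
move=> hc hN; exists (Am *m N); split.
  by rewrite det_mulmx mulf_neq0 ?detA // (det_ne0 hc hN).
by move=> v; rewrite img_iff.
Qed.

Lemma img_similar N c : 0 < c -> N *m N^T = c%:M -> lat_similar (@A2_6 R) (img N).
Proof. by move=> hc hN; exists N, c; split => //; split => // v. Qed.

Notation Rm := (Rm R).

Lemma A2_6_Rm u : A2_6 u -> A2_6 (u *m Rm).
Proof.
case/A2_6_iff => c ->; apply/A2_6_iff; exists (c *m tomx 12 12 Pcl).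
by rewrite -mulmxA (A_Rm R) mulmxA map_mxM.
Qed.

Lemma RmRm : Rm *m Rm = 1%:M.
Proof. by have := Rm_Rm R; rewrite /Rm tr_diag_mx. Qed.

Lemma img_congr N1 N2 c : 0 < c -> N1 *m N1^T = c%:M -> N2 *m N2^T = c%:M ->
  lat_congruent (img N1) (img N2).
Proof.
move=> hc h1 h2.
have hc0 : c != 0 by rewrite gt_eqF.
have [M1 [hNM hMN]] : exists M1, N1 *m M1 = 1%:M /\ M1 *m N1 = 1%:M.
  have hNM : N1 *m (c^-1 *: N1^T) = 1%:M by rewrite -scalemxAr h1 scale_scalar_mx mulVf.
  by exists (c^-1 *: N1^T); split => //; apply: mulmx1C.
have hsc : N2 *m N2^T = N1 *m N1^T by rewrite h1 h2.
pose T := M1 *m N2.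
pose T' := M1 *m Rm *m N2.
have hT : T *m T^T = 1%:M.
  rewrite /T trmx_mul mulmxA -(mulmxA M1) hsc !mulmxA hMN mul1mx -trmx_mul hMN.
  by rewrite trmx1.
have hT' : T' *m T'^T = 1%:M.
  have e : T' *m T'^T = M1 *m (Rm *m (N2 *m N2^T) *m Rm^T) *m M1^T.
    by rewrite /T' !trmx_mul !mulmxA.
  rewrite e h2 mul_mx_scalar -scalemxAl (Rm_Rm R) scalemx1 -h1 !mulmxA hMN mul1mx -trmx_mul hMN.
  by rewrite trmx1.
have imT : image_by T (img N1) (img N2).
  move=> v; split.
    case=> a [ha ->]; exists (a *m N1); split; first by exists a.
    by rewrite /T mulmxA -(mulmxA a) hNM mulmx1.
  case=> u [[a [ha ->]] ->]; exists a; split => //.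
  by rewrite /T mulmxA -(mulmxA a) hNM mulmx1.
have imT' : image_by T' (img N1) (img N2).
  move=> v; split.
    case=> a [ha ->]; exists (a *m Rm *m N1); split; first by exists (a *m Rm); split => //; apply: A2_6_Rm.
    by rewrite /T' !mulmxA -(mulmxA (a *m Rm)) hNM mulmx1 -(mulmxA a) RmRm mulmx1.
  case=> u [[a [ha ->]] ->]; exists (a *m Rm); split; first exact: A2_6_Rm.
  by rewrite /T' !mulmxA -(mulmxA a N1) hNM mulmx1.
have hdT : \det T ^+ 2 = 1.
  by have := congr1 determinant hT; rewrite det_mulmx det_tr det1 expr2.
have hdT' : \det T' = - \det T.
  by rewrite /T /T' !det_mulmx (det_Rm R) mulrN1 mulNr.
move/eqP: hdT; rewrite sqrf_eq1 => /orP [/eqP hd | /eqP hd].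
  by exists T.
by exists T'; split => //; split => //; rewrite hdT' hd opprK.
Qed.

End Real2.


Lemma normQ_L (l : seq int) : size l = 12%N -> normQ (tomx 1 12 [:: l]) = 2 * normL l.
Proof.
case: l => [|a0 [|a1 [|a2 [|a3 [|a4 [|a5 [|a6 [|a7 [|a8 [|a9 [|a10 [|a11 [|? ?]]]]]]]]]]]]] //= _.
rewrite /normQ tomx_tr !tomx_mul mxE.
rewrite /lmul /lbuild /lget /lsum /=.
rewrite /Nz /lget /=. ring.
Qed.

Definition cl (c : 'rV[int]_12) : seq int := [seq c ord0 (inord k) | k <- iota 0 12].
Lemma size_cl c : size (cl c) = 12%N.
Proof. by rewrite size_map size_iota. Qed.
Lemma rowl_cl c : tomx 1 12 [:: cl c] = c.
Proof.
apply/matrixP => i j; rewrite (ord1 i) mxE /lget /= /cl (nth_map 0%N) ?size_iota //.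
by rewrite nth_iota // add0n inord_val.
Qed.
Lemma cl_rowl (l : seq int) : size l = 12%N -> cl (tomx 1 12 [:: l]) = l.
Proof.
move=> hs; apply: (@eq_from_nth _ 0); rewrite size_cl ?hs // => k hk.
rewrite /cl (nth_map 0%N) ?size_iota // nth_iota // add0n mxE /lget /=.
by rewrite inordK.
Qed.
Lemma normQ_cl c : normQ c = 2 * normL (cl c).
Proof. by rewrite -{1}(rowl_cl c) normQ_L ?size_cl. Qed.

Lemma ldiv_of p q d a : (forall (i : 'I_p) (j : 'I_q), (d %| tomx p q a i j)%Z) -> ldiv p q d a.
Proof.
move=> h; apply/allP => r /mapP [i hi ->]; apply/allP => e /mapP [j hj ->].
rewrite mem_iota add0n in hi; rewrite mem_iota add0n in hj.
by have := h (Ordinal hi) (Ordinal hj); rewrite mxE.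
Qed.

Lemma Kc_Kl c : Kc c -> Kl (cl c).
Proof.
move=> h; apply: ldiv_of => i j; rewrite (ord1 i) -tomx_mul rowl_cl; exact: h.
Qed.

Lemma cl_zero c : cl c = zero12 -> c = 0.
Proof. by move=> h; rewrite -(rowl_cl c) h; apply/matrixP => i j; rewrite (ord1 i) !mxE /lget [nth [::] _ _]/= nth_nseq if_same. Qed.

Lemma enumK c : Kc c -> c != 0 -> (normL (cl c) <= 6 -> (normL (cl c) = 6 /\ cl c \in Slist)).
Proof.
move=> hK hc hn.
have := allgenP (lexx 6) chkK_ok (size_cl c) hn; rewrite /= /chkK Kc_Kl //.
have -> : (cl c == zero12) = false by apply/negbTE; apply: contra hc => /eqP /cl_zero ->.
by case: eqP => // -> ->.
Qed.

Lemma enumU c : c != 0 -> normL (cl c) <= 1 -> cl c \in Ulist.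
Proof.
move=> hc hn.
have := allgenP (b := 1) (pre := [::]) (ler1n _ _) chkU_ok (size_cl c) hn.
by rewrite /= ifF //; apply/negbTE; apply: contra hc => /eqP /cl_zero ->.
Qed.

Definition Pmx (i : nat) : 'M[int]_12 := tomx 12 12 (Pl i).

Lemma hc1 i : (i < 21)%N -> Pmx i *m tomx 12 12 G2l *m (Pmx i)^T = 6 *: tomx 12 12 G2l.
Proof.
move=> hi; have := allP chk_c1_ok i; rewrite mem_iota add0n => /(_ hi) /eqP h.
by rewrite /Pmx tomx_tr !tomx_mul h tomx_scale.
Qed.

Lemma divmx (d : int) m n (M : 'M[int]_(m, n)) : (forall i j, (d %| M i j)%Z) ->
  M = d *: map_mx (fun x => (x %/ d)%Z) M.
Proof. by move=> h; apply/matrixP => i j; rewrite !mxE mulrC divzK. Qed.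

Lemma scale_inj (d : int) m n (A B : 'M[int]_(m, n)) : d != 0 -> d *: A = d *: B -> A = B.
Proof.
move=> hd h; apply/matrixP => i j; have := congr1 (fun M : 'M[int]_(m, n) => M i j) h.
by rewrite /= !mxE => /(mulfI hd).
Qed.

Lemma Kc_scale3 (f : 'rV[int]_7) (e : 'rV[int]_12) : e *m Wmx = 3 *: f -> Kc e.
Proof. by move=> h j; rewrite h mxE; apply: dvdz_mulr; exact: dvdzz. Qed.

Lemma hc2 i c : (i < 21)%N -> Kc (c *m Pmx i).
Proof.
move=> hi; have := allP chk_c2_ok i; rewrite mem_iota add0n => /(_ hi) /ldivP h.
rewrite -tomx_mul -/(Pmx i) -/Wmx in h.
apply: (@Kc_scale3 (c *m map_mx (fun x => (x %/ 3)%Z) (Pmx i *m Wmx))).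
by rewrite -mulmxA {1}(divmx h) scalemxAr.
Qed.

Lemma vecmat_row a P : tomx 1 12 [:: vecmat a P] = tomx 1 12 [:: a] *m tomx 12 12 P.
Proof. by rewrite tomx_mul. Qed.

Lemma size_vecmat a P : size (vecmat a P) = 12%N.
Proof. by rewrite /vecmat /lmul /lbuild /=. Qed.

Lemma Slist_mem l : l \in Slist -> exists i, (i < 21)%N /\ exists a, l = vecmat a (Pl i).
Proof.
case/allpairsP => [[i a] [hi ha ->]] /=; exists i; split; last by exists a.
by rewrite mem_iota add0n in hi.
Qed.

Lemma Stag_mem i a : (i < 21)%N -> a \in Ulist -> (i, vecmat a (Pl i)) \in Stag.
Proof. by move=> hi ha; apply/allpairsP; exists (i, a); rewrite mem_iota add0n hi. Qed.

Lemma Stag_uniq i j l : (i, l) \in Stag -> (j, l) \in Stag -> i = j.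
Proof.
move=> h1 h2; have := allP (allP chkD_ok _ h1) _ h2; rewrite /= eqxx.
by move/eqP.
Qed.

Lemma part2_in i c : (i < 21)%N -> Kc c -> exists d, d *m Pmx i = 2 *: c.
Proof.
move=> hi hK; have := allP chk_c3_ok i; rewrite mem_iota add0n => /(_ hi) /andP [/eqP h1 h2].
set Ym := tomx 12 12 (Ypl i); set Xm := tomx 7 12 (Xl i).
have hYP : Ym *m Pmx i = 6 *: 1%:M by rewrite /Ym /Pmx tomx_mul h1 tomx_scale tomx_id.
have := ldivP h2; rewrite tomx_sub -tomx_mul -/Ym -/Xm -/Wmx => hd.
have hYW := divmx hd; set Zm := map_mx _ (Ym - Wmx *m Xm) in hYW.
have hq : forall a b, (3 %| (c *m Wmx) a b)%Z by move=> a b; rewrite (ord1 a); exact: hK.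
have hcW := divmx hq; set q := map_mx _ (c *m Wmx) in hcW.
exists (q *m Xm + c *m Zm).
have e3 : 3 *: (q *m Xm + c *m Zm) = c *m Ym.
  rewrite scalerDr scalemxAl scalemxAr -hcW -hYW -mulmxA -mulmxDr.
  by rewrite addrC subrK.
apply: (@scale_inj 3) => //.
rewrite scalemxAl e3 -mulmxA hYP -scalemxAr mulmx1 scalerA.
done.
Qed.

Lemma part2_out a0 a1 : a0 *m Pmx 0 = a1 *m Pmx 1 -> exists e, a0 *m Pmx 0 = 2 *: e /\ Kc e.
Proof.
move=> h.
have := chk_c4_ok; rewrite /chk_c4 => /and4P [k1 k2 k3 k4].
move: (ldivP k1) (ldivP k2) (ldivP k3) (ldivP k4).
rewrite -!tomx_mul !tomx_sub tomx_id -/(Pmx 0) -/(Pmx 1) -/Wmx.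
set G0m := tomx 12 12 G0l; set Gp0m := tomx 12 7 Gp0l.
move=> /divmx d1 /divmx d2 /divmx d3 /divmx d4.
set H0 := map_mx _ (Pmx 0 *m G0m) in d1.
set H1 := map_mx _ (Pmx 1 *m (1%:M - G0m)) in d2.
set K0 := map_mx _ (Pmx 0 *m Gp0m) in d3.
set K1 := map_mx _ (Pmx 1 *m (Wmx - Gp0m)) in d4.
exists (a0 *m H0 + a1 *m H1); split.
  have -> : a0 *m Pmx 0 = a0 *m Pmx 0 *m G0m + a1 *m Pmx 1 *m (1%:M - G0m).
    by rewrite -h -mulmxDr addrC subrK mulmx1.
  by rewrite -!mulmxA d1 d2 -!scalemxAr scalerDr.
apply: (@Kc_scale3 (a0 *m K0 + a1 *m K1)).
apply: (@scale_inj 2) => //.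
rewrite scalemxAl.
have -> : 2 *: (a0 *m H0 + a1 *m H1) = a0 *m Pmx 0.
  by rewrite scalerDr scalemxAr scalemxAr -d1 -d2 !mulmxA -h -mulmxDr addrC subrK mulmx1.
have -> : a0 *m Pmx 0 *m Wmx = a0 *m Pmx 0 *m Gp0m + a1 *m Pmx 1 *m (Wmx - Gp0m).
  by rewrite -h -mulmxDr addrC subrK.
rewrite -!mulmxA d3 d4 -!scalemxAr -scalerDr scalerA.
done.
Qed.


Section Final.
Variable R : realType.
Notation intmx := (map_mx (fun n : int => (n%:~R : R))).
Notation Am := (Am R).

Definition Lat (i : nat) : vec R -> Prop := img (Nmat R (Pmx i)).

Lemma NN i : (i < 21)%N -> Nmat R (Pmx i) *m (Nmat R (Pmx i))^T = ((6 : int)%:~R)%:M.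
Proof. by move=> hi; apply: sim_gen; apply: hc1. Qed.

Lemma Lat_iff i v : Lat i v <-> exists a, v = intmx (a *m Pmx i) *m Am.
Proof.
rewrite /Lat img_iff; split; case=> a ->; exists a; by rewrite mulmxA Nmat_mul.
Qed.

Lemma Lat_K12 i v : (i < 21)%N -> Lat i v -> K12lat v.
Proof.
move=> hi /Lat_iff [a ->]; apply/K12_iff; exists (a *m Pmx i); split => //; exact: hc2.
Qed.

Lemma dotc (c : 'rV[int]_12) : dot (intmx c *m Am) (intmx c *m Am) = (normL (cl c))%:~R.
Proof. by rewrite dot_norm normQ_cl intrM mulrC mulrA mulVf ?mul1r // pnatr_eq0. Qed.

Lemma intmx_0 m n : intmx (0 : 'M[int]_(m, n)) = 0.
Proof. by apply/matrixP => i j; rewrite !mxE. Qed.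

Lemma intmx0 (c : 'rV[int]_12) : intmx c *m Am = 0 -> c = 0.
Proof. move=> h; apply: (@intmxA_inj R); rewrite intmx_0 mul0mx; exact: h. Qed.

Lemma K12_ge6 (w : vec R) : K12lat w -> w != 0 -> 6 <= dot w w.
Proof.
case/K12_iff => c [-> hK] hw.
have hc : c != 0 by apply: contra hw => /eqP ->; rewrite intmx_0 mul0mx.
rewrite dotc.
case: (lerP (normL (cl c)) 6) => hn.
  by case: (enumK hK hc hn) => -> _.
by rewrite -[6]/((6 : int)%:~R) ler_int ltW.
Qed.

Definition e0l : seq int := 1 :: nseq 11 0.
Definition w0 i : vec R := intmx (tomx 1 12 [:: e0l] *m Pmx i) *m Am.

Lemma w0_dot i : (i < 21)%N -> dot (w0 i) (w0 i) = 6.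
Proof.
move=> hi; rewrite /w0 dot_norm (normQ_mul _ (hc1 hi)) normQ_L //.
by rewrite /e0l /= /Nz /=; lra.
Qed.

Lemma w0_Lat i : Lat i (w0 i).
Proof. by apply/Lat_iff; exists (tomx 1 12 [:: e0l]). Qed.

Lemma w0_ne0 i : (i < 21)%N -> w0 i != 0.
Proof.
move=> hi; apply/eqP => h; have := w0_dot hi; rewrite h /dot mul0mx mxE => /eqP.
by rewrite eq_sym pnatr_eq0.
Qed.

Lemma minLat_K12 i v : (i < 21)%N -> minvec (Lat i) v -> minvec (@K12lat R) v /\ dot v v <= 6.
Proof.
move=> hi [hv [hv0 hmin]].
have h6 : dot v v <= 6 by rewrite -(w0_dot hi); apply: hmin; [exact: w0_Lat | exact: w0_ne0].
split => //; split; first exact: Lat_K12 hv.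
split => // w hw hw0; apply: le_trans h6 _; exact: K12_ge6.
Qed.

Lemma minK12_Lat (v : vec R) : minvec (@K12lat R) v -> exists i, (i < 21)%N /\ minvec (Lat i) v.
Proof.
move=> [hv [hv0 hmin]].
have h6 : dot v v = 6.
  apply/eqP; rewrite eq_le K12_ge6 // andbT.
  rewrite -(w0_dot (isT : (0 < 21)%N)); apply: hmin; last exact: w0_ne0.
  exact: Lat_K12 (w0_Lat 0).
have [c [ec hK]] := proj1 (K12_iff v) hv.
have hc : c != 0 by apply: contra hv0 => /eqP hc0; rewrite ec hc0 intmx_0 mul0mx.
have hn : normL (cl c) = 6.
  by apply/eqP; rewrite -(eqr_int R) -dotc -ec h6.
have hle : normL (cl c) <= 6 by rewrite hn.
case: (enumK hK hc hle) => _ /Slist_mem [i [hi [a ha]]].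
exists i; split => //; split.
  apply/Lat_iff; exists (tomx 1 12 [:: a]); rewrite ec -vecmat_row -ha rowl_cl //.
split => // w hw hw0; apply: hmin => //; exact: Lat_K12 hw.
Qed.

Lemma minLat_unit i v : (i < 21)%N -> minvec (Lat i) v ->
  exists a, a \in Ulist /\ v = intmx (tomx 1 12 [:: vecmat a (Pl i)]) *m Am.
Proof.
move=> hi hm; have [_ h6] := minLat_K12 hi hm.
case: hm => /Lat_iff [a ea] [hv0 _].
have ha : a != 0 by apply: contra hv0 => /eqP ha0; rewrite ea ha0 mul0mx intmx_0 mul0mx.
exists (cl a); split.
  apply: enumU => //.
  have := h6; rewrite ea dot_norm (normQ_mul _ (hc1 hi)) normQ_cl.
  move=> h; have h' : ((6 * (2 * normL (cl a)))%:~R : R) <= 12 by lra.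
  move: h'; rewrite -[12]/((12 : int)%:~R : R) ler_int; lia.
by rewrite ea vecmat_row rowl_cl.
Qed.

Lemma min_disj i j v : (i < 21)%N -> (j < 21)%N -> minvec (Lat i) v -> minvec (Lat j) v -> i = j.
Proof.
move=> hi hj h1 h2.
case: (minLat_unit hi h1) => a [ha e1]; case: (minLat_unit hj h2) => b [hb e2].
have e : vecmat a (Pl i) = vecmat b (Pl j).
  have := intmxA_inj (etrans (esym e1) e2) => /(congr1 cl).
  by rewrite !cl_rowl ?size_vecmat.
apply: (Stag_uniq (Stag_mem hi ha)); rewrite e; exact: Stag_mem.
Qed.

Lemma trZ (a : R) (A : 'M[R]_12) : (a *: A)^T = a *: A^T.
Proof. by apply/matrixP => i j; rewrite !mxE. Qed.

Definition Mlat (i : nat) : vec R -> Prop := img (2^-1 *: Nmat R (Pmx i)).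
Definition cM : R := 2^-1 * 2^-1 * (6 : int)%:~R.

Lemma cM_gt0 : 0 < cM.
Proof. rewrite /cM -[(6 : int)%:~R]/(6 : R); lra. Qed.

Lemma MM i : (i < 21)%N -> (2^-1 *: Nmat R (Pmx i)) *m (2^-1 *: Nmat R (Pmx i))^T = cM%:M.
Proof.
move=> hi; rewrite trZ -scalemxAl -scalemxAr NN // !scale_scalar_mx /cM mulrA.
done.
Qed.

Lemma Mlat_iff i v : Mlat i v <-> exists a, v = 2^-1 *: (intmx (a *m Pmx i) *m Am).
Proof.
rewrite /Mlat img_iff; split; case=> a ->; exists a;
  by rewrite -!scalemxAr mulmxA Nmat_mul.
Qed.

Lemma intmx_scale (k : int) m n (c : 'M[int]_(m, n)) : intmx (k *: c) = k%:~R *: intmx c.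
Proof. by apply/matrixP => i j; rewrite !mxE intrM. Qed.

Lemma half2 (B : 'M[R]_(1, 12)) : 2^-1 *: ((2 : int)%:~R *: B) = B.
Proof.
have h2 : ((2 : int)%:~R : R) != 0 by rewrite intr_eq0.
by rewrite scalerA mulVf // scale1r.
Qed.

Lemma inter_iff (v : vec R) : (forall i : 'I_21, Mlat i v) <-> K12lat v.
Proof.
split.
  move=> h.
  case/Mlat_iff: (h (@Ordinal 21 0 isT)) => a0 e0.
  case/Mlat_iff: (h (@Ordinal 21 1 isT)) => a1 e1.
  have e : a0 *m Pmx 0 = a1 *m Pmx 1.
    apply: (@intmxA_inj R).
    have := congr1 (fun B => (2 : int)%:~R *: B) (etrans (esym e0) e1).
    have h2 : ((2 : int)%:~R : R) != 0 by rewrite intr_eq0.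
    by rewrite /= !scalerA mulfV // !scale1r.
  case: (part2_out e) => f [ef hf].
  apply/K12_iff; exists f; split => //.
  by rewrite e0 ef intmx_scale -scalemxAl half2.
case/K12_iff => c [-> hK] i.
case: (part2_in (ltn_ord i) hK) => d hd.
apply/Mlat_iff; exists d; rewrite hd intmx_scale -scalemxAl half2 //.
Qed.

End Final.

Theorem mainTheorem9 (R : realType) :
  (exists L : 'I_21 -> (vec R -> Prop),
     (forall i, is_lattice (L i) /\ (forall v, L i v -> K12lat v) /\ lat_similar (@A2_6 R) (L i)) /\
     (forall v, minvec (@K12lat R) v <-> exists i, minvec (L i) v) /\
     (forall i j v, minvec (L i) v -> minvec (L j) v -> i = j))
  /\
  (exists M : 'I_21 -> (vec R -> Prop),
     (forall i, lat_similar (@A2_6 R) (M i)) /\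
     (forall i j, lat_congruent (M i) (M j)) /\
     lat_similar (@K12lat R) (fun v => forall i, M i v)).
Proof.
have h6 : ((6 : int)%:~R : R) != 0 by rewrite intr_eq0.
have h6p : 0 < ((6 : int)%:~R : R) by rewrite ltr0z.
split.
  exists (fun i : 'I_21 => @Lat R i); split; [|split].
  - move=> i; split; first exact: img_lattice h6 (@NN R _ (ltn_ord i)).
    split; first by move=> v; apply: Lat_K12 (ltn_ord i).
    exact: img_similar h6p (@NN R _ (ltn_ord i)).
  - move=> v; split.
      by case/minK12_Lat => i [hi hm]; exists (Ordinal hi).
    by case=> i hm; case: (minLat_K12 (ltn_ord i) hm).
  - by move=> i j v h1 h2; apply: val_inj; apply: (min_disj (ltn_ord i) (ltn_ord j) h1 h2).
exists (fun i : 'I_21 => @Mlat R i); split; [|split].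
- move=> i; exact: img_similar (@cM_gt0 R) (@MM R _ (ltn_ord i)).
- move=> i j; exact: img_congr (@cM_gt0 R) (@MM R _ (ltn_ord i)) (@MM R _ (ltn_ord j)).
- exists 1%:M, 1; split; first exact: ltr01.
  split; first by rewrite trmx1 mulmx1.
  move=> v; rewrite inter_iff; split; first by move=> h; exists v; rewrite mulmx1.
  by case=> u [hu ->]; rewrite mulmx1.
Qed.
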